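(* Let $|p|<1$, $|P|<1$, let $n\ge0$ be an integer, and let $a,b,c,q,r$ and $A,B,C,Q,R$ be nonzero complex numbers such that all expressions below are well defined. Then \begin{align*} &\sum_{k=0}^n\frac{\theta(ar^kq^k,\,br^kq^{-k};p)}{\theta(a,b;p)}\,\frac{(a,b;r,p)_k\,(c,a/(bc);q,p)_k}{(q,aq/b;q,p)_k\,(ar/c,bcr;r,p)_k}\\ &\qquad\times\frac{(CR^{-n}/A,\,R^{-n}/(BC);R,P)_k\,(Q^{-n},\,BQ^{-n}/A;Q,P)_k}{(Q^{-n}/C,\,BCQ^{-n}/A;Q,P)_k\,(R^{-n}/A,\,R^{-n}/B;R,P)_k}\,q^k\\ &=\frac{(ar,br;r,p)_n\,(cq,aq/(bc);q,p)_n\,(Q,AQ/B;Q,P)_n\,(AR/C,BCR;R,P)_n}{(q,aq/b;q,p)_n\,(ar/c,bcr;r,p)_n\,(AR,BR;R,P)_n\,(CQ,AQ/(BC);Q,P)_n}\\ &\quad\times\sum_{k=0}^n\frac{\theta(AR^kQ^k,\,BR^kQ^{-k};P)}{\theta(A,B;P)}\,\frac{(A,B;R,P)_k\,(C,A/(BC);Q,P)_k}{(Q,AQ/B;Q,P)_k\,(AR/C,BCR;R,P)_k}\\ &\qquad\times\frac{(cr^{-n}/a,\,r^{-n}/(bc);r,p)_k\,(q^{-n},\,bq^{-n}/a;q,p)_k}{(q^{-n}/c,\,bcq^{-n}/a;q,p)_k\,(r^{-n}/a,\,r^{-n}/b;r,p)_k}\,Q^k. \end{align*}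
   Context: For $|p|<1$ and $x\neq 0$, $\theta(x;p)=(x;p)_\infty(p/x;p)_\infty$ where $(x;p)_\infty=\prod_{k\ge 0}(1-xp^k)$, and $\theta(x_1,\dots,x_m;p)=\prod_{i=1}^m\theta(x_i;p)$. For $a\ne0$ and integer $k\ge0$, $(a;q,p)_k=\prod_{j=0}^{k-1}\theta(aq^j;p)$ (empty product $=1$), and $(a_1,\dots,a_m;q,p)_k=\prod_i(a_i;q,p)_k$. *)

(* Defs.v *)
From Stdlib Require Import Reals.
From Coquelicot Require Import Coquelicot.
Open Scope C_scope.

Fixpoint cpow (x : C) (n : nat) : C :=
  match n with O => 1 | S m => cpow x m * x end.

Fixpoint csum (f : nat -> C) (n : nat) : C :=
  match n with O => f O | S m => csum f m + f (S m) end.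

Fixpoint ppart (x p : C) (N : nat) : C :=
  match N with O => 1 | S M => ppart x p M * (1 - x * cpow p M) end.

(* (x;p)_\infty = lim_{N -> oo} \prod_{k<N} (1 - x p^k), the limit being
   taken componentwise (real and imaginary parts); it exists for |p| < 1. *)
Definition qinf (x p : C) : C :=
  (real (Lim_seq (fun N => Re (ppart x p N))),
   real (Lim_seq (fun N => Im (ppart x p N)))).

Definition theta (x p : C) : C := qinf x p * qinf (p / x) p.

(* (a;q,p)_k = \prod_{j=0}^{k-1} theta(a q^j; p) *)
Fixpoint ell (a q p : C) (k : nat) : C :=
  match k with O => 1 | S j => ell a q p j * theta (a * cpow q j) p end.

(* Main.v *)
Require Import Defs.
From Stdlib Require Import Reals Lra Lia ZArith.
From Coquelicot Require Import Coquelicot.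
Open Scope C_scope.

Lemma cpow_Cpow x n : cpow x n = x ^ n.
Proof. induction n; simpl; [reflexivity| rewrite IHn; ring]. Qed.

Lemma Cmod_le_re_im (z : C) : (Cmod z <= Rabs (Re z) + Rabs (Im z))%R.
Proof.
  destruct z as [x y]. unfold Cmod; simpl.
  pose proof (Rabs_pos x); pose proof (Rabs_pos y).
  rewrite <- (sqrt_Rsqr (Rabs x + Rabs y)) by lra.
  apply sqrt_le_1_alt. pose proof (pow2_abs x); pose proof (pow2_abs y).
  unfold Rsqr. simpl in *. nra.
Qed.

Lemma Re_minus (a b : C) : Re (a - b) = (Re a - Re b)%R.
Proof. destruct a, b; simpl; ring. Qed.
Lemma Im_minus (a b : C) : Im (a - b) = (Im a - Im b)%R.
Proof. destruct a, b; simpl; ring. Qed.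
Lemma im_le_Cmod (c : C) : (Rabs (Im c) <= Cmod c)%R.
Proof.
  destruct c as [x y]. unfold Cmod; simpl.
  rewrite <- sqrt_Rsqr_abs. apply sqrt_le_1_alt. unfold Rsqr. nra.
Qed.

Definition cv (u : nat -> C) (l : C) : Prop :=
  forall eps : R, (0 < eps)%R -> exists N, forall n, (N <= n)%nat -> (Cmod (u n - l) < eps)%R.

Lemma cv_Re u l : cv u l -> Un_cv (fun n => Re (u n)) (Re l).
Proof.
  intros H eps Heps. destruct (H eps Heps) as [N HN]. exists N. intros n Hn.
  unfold R_dist. rewrite <- Re_minus. eapply Rle_lt_trans; [apply re_le_Cmod|]. apply HN; lia.
Qed.
Lemma cv_Im u l : cv u l -> Un_cv (fun n => Im (u n)) (Im l).
Proof.
  intros H eps Heps. destruct (H eps Heps) as [N HN]. exists N. intros n Hn.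
  unfold R_dist. rewrite <- Im_minus. eapply Rle_lt_trans; [apply im_le_Cmod|]. apply HN; lia.
Qed.
Lemma cv_of_re_im u l : Un_cv (fun n => Re (u n)) (Re l) -> Un_cv (fun n => Im (u n)) (Im l) -> cv u l.
Proof.
  intros H1 H2 eps Heps.
  destruct (H1 (eps/2)%R ltac:(lra)) as [N1 HN1].
  destruct (H2 (eps/2)%R ltac:(lra)) as [N2 HN2].
  exists (max N1 N2). intros n Hn.
  eapply Rle_lt_trans; [apply Cmod_le_re_im|]. rewrite Re_minus, Im_minus.
  specialize (HN1 n ltac:(lia)); specialize (HN2 n ltac:(lia)). unfold R_dist in *. lra.
Qed.

Lemma cv_plus u v l m : cv u l -> cv v m -> cv (fun n => u n + v n) (l + m).
Proof.
  intros H1 H2. apply cv_of_re_im.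
  - pose proof (CV_plus _ _ _ _ (cv_Re _ _ H1) (cv_Re _ _ H2)). destruct l, m; simpl in *.
    intros e He; destruct (H e He) as [N HN]; exists N; intros n Hn; specialize (HN n Hn).
    destruct (u n), (v n); simpl in *; auto.
  - pose proof (CV_plus _ _ _ _ (cv_Im _ _ H1) (cv_Im _ _ H2)). destruct l, m; simpl in *.
    intros e He; destruct (H e He) as [N HN]; exists N; intros n Hn; specialize (HN n Hn).
    destruct (u n), (v n); simpl in *; auto.
Qed.

Lemma cv_mult u v l m : cv u l -> cv v m -> cv (fun n => u n * v n) (l * m).
Proof.
  intros H1 H2.
  pose proof (cv_Re _ _ H1) as A1. pose proof (cv_Im _ _ H1) as B1.
  pose proof (cv_Re _ _ H2) as A2. pose proof (cv_Im _ _ H2) as B2.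
  apply cv_of_re_im.
  - pose proof (CV_minus _ _ _ _ (CV_mult _ _ _ _ A1 A2) (CV_mult _ _ _ _ B1 B2)) as H.
    destruct l, m; simpl in *.
    intros e He; destruct (H e He) as [N HN]; exists N; intros n Hn; specialize (HN n Hn).
    destruct (u n), (v n); simpl in *; auto.
  - pose proof (CV_plus _ _ _ _ (CV_mult _ _ _ _ A1 B2) (CV_mult _ _ _ _ B1 A2)) as H.
    destruct l, m; simpl in *.
    intros e He; destruct (H e He) as [N HN]; exists N; intros n Hn; specialize (HN n Hn).
    destruct (u n), (v n); simpl in *; auto.
Qed.

Lemma cv_const c : cv (fun _ => c) c.
Proof. intros e He. exists O. intros. replace (c - c) with (0:C) by ring. rewrite Cmod_0. lra. Qed.

Lemma cv_ext u v l : (forall n, u n = v n) -> cv u l -> cv v l.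
Proof. intros E H e He. destruct (H e He) as [N HN]. exists N. intros. rewrite <- E. auto. Qed.

Lemma cv_ext_ev u v l N0 : (forall n, (N0 <= n)%nat -> u n = v n) -> cv u l -> cv v l.
Proof. intros E H e He. destruct (H e He) as [N HN]. exists (max N N0). intros. rewrite <- E by lia. apply HN; lia. Qed.

Lemma cv_shift u l k : cv u l -> cv (fun n => u (n + k)%nat) l.
Proof. intros H e He. destruct (H e He) as [N HN]. exists N. intros. apply HN; lia. Qed.


Lemma cv_unique u l m : cv u l -> cv u m -> l = m.
Proof.
  intros H1 H2.
  destruct (Ceq_dec l m) as [|Hne]; auto. exfalso.
  assert (Hp : (0 < Cmod (l - m))%R). { apply Cmod_gt_0. intro E. apply Hne.
    replace l with ((l - m) + m) by ring. rewrite E. ring. }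
  assert (Hh : (0 < Cmod (l - m) / 2)%R) by lra.
  destruct (H1 _ Hh) as [N1 HN1].
  destruct (H2 _ Hh) as [N2 HN2].
  specialize (HN1 (max N1 N2) ltac:(lia)). specialize (HN2 (max N1 N2) ltac:(lia)).
  assert (Cmod (l - m) <= Cmod (u (max N1 N2) - m) + Cmod (u (max N1 N2) - l))%R.
  { replace (l - m) with ((u (max N1 N2) - m) + - (u (max N1 N2) - l)) by ring.
    eapply Rle_trans; [apply Cmod_triangle|]. rewrite Cmod_opp. lra. }
  lra.
Qed.

Lemma cv_bound v L B : cv v L -> (forall k, (Cmod (v k) <= B)%R) -> (Cmod L <= B)%R.
Proof.
  intros H Hb. destruct (Rle_or_lt (Cmod L) B) as [|Hlt]; auto.
  assert (He : (0 < Cmod L - B)%R) by lra.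
  destruct (H _ He) as [N HN]. specialize (HN N (le_n _)). specialize (Hb N).
  assert (Cmod L <= Cmod (v N) + Cmod (v N - L))%R.
  { replace L with (v N + - (v N - L)) at 1 by ring.
    eapply Rle_trans; [apply Cmod_triangle|]. rewrite Cmod_opp. lra. }
  lra.
Qed.

Lemma cv_bound_ev v L B N0 : cv v L -> (forall k, (N0 <= k)%nat -> (Cmod (v k) <= B)%R) -> (Cmod L <= B)%R.
Proof.
  intros H Hb. apply (cv_bound (fun k => v (k + N0)%nat)).
  - apply cv_shift; auto.
  - intros; apply Hb; lia.
Qed.

Lemma cv_minus u v l m : cv u l -> cv v m -> cv (fun n => u n - v n) (l - m).
Proof.
  intros H1 H2. apply cv_plus; auto.
  apply (cv_ext (fun n => (-1) * v n)). { intros; ring. }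
  replace (- m) with ((-1) * m) by ring. apply cv_mult; auto. apply cv_const.
Qed.

Lemma cv_scal c u l : cv u l -> cv (fun n => c * u n) (c * l).
Proof. intros; apply cv_mult; auto; apply cv_const. Qed.


Lemma geo_partial u (K r : R) : (0 <= r < 1)%R ->
  (forall n, (Cmod (u (S n) - u n) <= K * r ^ n)%R) ->
  forall n k, (Cmod (u (n + k)%nat - u n) <= K * r ^ n * (1 - r ^ k) / (1 - r))%R.
Proof.
  intros Hr H n k. induction k.
  - rewrite Nat.add_0_r. replace (u n - u n) with (0:C) by ring. rewrite Cmod_0. simpl.
    replace (1 - 1)%R with 0%R by ring. unfold Rdiv. rewrite Rmult_0_r, Rmult_0_l. lra.
  - replace (u (n + S k)%nat - u n) with ((u (S (n + k)) - u (n + k)%nat) + (u (n + k)%nat - u n))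
      by (rewrite Nat.add_succ_r; ring).
    eapply Rle_trans; [apply Cmod_triangle|].
    specialize (H (n + k)%nat). rewrite pow_add in H.
    replace (K * r ^ n * (1 - r ^ S k) / (1 - r))%R with
      (K * (r ^ n * r ^ k) + K * r ^ n * (1 - r ^ k) / (1 - r))%R.
    + lra.
    + simpl. field. lra.
Qed.

Lemma cauchy_C u : (forall eps, (0 < eps)%R -> exists N, forall n m, (N <= n)%nat -> (N <= m)%nat ->
   (Cmod (u n - u m) < eps)%R) -> exists l, cv u l.
Proof.
  intros H.
  assert (C1 : Cauchy_crit (fun n => Re (u n))).
  { intros e He. destruct (H e He) as [N HN]. exists N. intros n m Hn Hm. unfold R_dist.
    rewrite <- Re_minus. eapply Rle_lt_trans; [apply re_le_Cmod|]. apply HN; lia. }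
  assert (C2 : Cauchy_crit (fun n => Im (u n))).
  { intros e He. destruct (H e He) as [N HN]. exists N. intros n m Hn Hm. unfold R_dist.
    rewrite <- Im_minus. eapply Rle_lt_trans; [apply im_le_Cmod|]. apply HN; lia. }
  destruct (Rcomplete.R_complete _ C1) as [lr Hr]. destruct (Rcomplete.R_complete _ C2) as [li Hi].
  exists (lr, li). apply cv_of_re_im; auto.
Qed.

Lemma geo_cauchy u (K r : R) : (0 <= r < 1)%R ->
  (forall n, (Cmod (u (S n) - u n) <= K * r ^ n)%R) ->
  exists l, cv u l /\ forall n, (Cmod (l - u n) <= K * r ^ n / (1 - r))%R.
Proof.
  intros Hr H.
  assert (HK : (0 <= K)%R). { specialize (H O). simpl in H. pose proof (Cmod_ge_0 (u 1%nat - u O)). lra. }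
  pose proof (geo_partial u K r Hr H) as G.
  assert (G' : forall n k, (Cmod (u (n + k)%nat - u n) <= K * r ^ n / (1 - r))%R).
  { intros n k. eapply Rle_trans; [apply G|]. unfold Rdiv. apply Rmult_le_compat_r.
    apply Rlt_le, Rinv_0_lt_compat; lra.
    pose proof (pow_le r n ltac:(lra)). pose proof (pow_le r k ltac:(lra)).
    rewrite <- (Rmult_1_r (K * r ^ n)) at 2. apply Rmult_le_compat_l; [nra|lra]. }
  destruct (cauchy_C u) as [l Hl].
  - intros eps He.
    assert (Hrn : exists N, forall n, (N <= n)%nat -> (K * r ^ n / (1 - r) < eps / 2)%R).
    { destruct (pow_lt_1_zero r ltac:(rewrite Rabs_pos_eq; lra) (eps / 2 * (1 - r) / (K + 1))%R)
        as [N HN].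
      { apply Rdiv_lt_0_compat; [|lra]. apply Rmult_lt_0_compat; lra. }
      exists N. intros n Hn. specialize (HN n Hn). rewrite Rabs_pos_eq in HN by (apply pow_le; lra).
      apply (Rmult_lt_reg_r (1 - r)); [lra|]. unfold Rdiv. rewrite Rmult_assoc, Rinv_l by lra.
      rewrite Rmult_1_r. pose proof (pow_le r n ltac:(lra)).
      apply (Rmult_lt_compat_l (K + 1)) in HN; [|lra].
      replace ((K + 1) * (eps / 2 * (1 - r) / (K + 1)))%R with (eps * / 2 * (1 - r))%R in HN
        by (field; lra). nra. }
    destruct Hrn as [N HN]. exists N. intros n m Hn Hm.
    destruct (Nat.le_ge_cases n m) as [Hnm|Hnm].
    + replace m with (n + (m - n))%nat by lia.
      replace (u n - u (n + (m - n))%nat) with (- (u (n + (m - n))%nat - u n)) by ring.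
      rewrite Cmod_opp. eapply Rle_lt_trans; [apply G'|]. specialize (HN n Hn). lra.
    + replace n with (m + (n - m))%nat by lia.
      eapply Rle_lt_trans; [apply G'|]. specialize (HN m Hm). lra.
  - exists l. split; auto. intros n.
    apply (cv_bound (fun k => u (k + n)%nat - u n)).
    + apply cv_minus; [apply cv_shift; auto | apply cv_const].
    + intros k. rewrite Nat.add_comm. apply G'.
Qed.

Lemma cv_lim u l : cv u l ->
  (real (Lim_seq (fun N => Re (u N))), real (Lim_seq (fun N => Im (u N)))) = l.
Proof.
  intros H.
  rewrite (is_lim_seq_unique _ (Re l)). 2: { apply is_lim_seq_Reals. apply cv_Re; auto. }
  rewrite (is_lim_seq_unique _ (Im l)). 2: { apply is_lim_seq_Reals. apply cv_Im; auto. }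
  simpl. destruct l; reflexivity.
Qed.

Lemma Cmod_1_minus_le z : (Cmod (1 - z) <= 1 + Cmod z)%R.
Proof. eapply Rle_trans; [apply Cmod_triangle|]. rewrite Cmod_opp, Cmod_1. lra. Qed.
Lemma Cmod_1_minus_ge z : (1 - Cmod z <= Cmod (1 - z))%R.
Proof.
  assert (Cmod 1 <= Cmod (1 - z) + Cmod z)%R.
  { replace (RtoC 1) with ((1 - z) + z) at 1 by ring. apply Cmod_triangle. }
  rewrite Cmod_1 in H. lra.
Qed.

Lemma ppart_S x p N : ppart x p (S N) = ppart x p N * (1 - x * cpow p N).
Proof. reflexivity. Qed.

Lemma exp_le_mono a b : (a <= b)%R -> (exp a <= exp b)%R.
Proof. intros [H|H]; [apply Rlt_le, exp_increasing; auto| subst; lra]. Qed.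

Lemma ppart_bound_aux x p N : (Cmod p < 1)%R ->
  (Cmod (ppart x p N) <= exp (Cmod x * (1 - Cmod p ^ N) / (1 - Cmod p)))%R.
Proof.
  intros Hp. pose proof (Cmod_ge_0 p). pose proof (Cmod_ge_0 x). induction N.
  - simpl. rewrite Cmod_1. replace (Cmod x * (1 - 1) / (1 - Cmod p))%R with 0%R by (field; lra).
    rewrite exp_0; lra.
  - rewrite ppart_S, Cmod_mult.
    replace (Cmod x * (1 - Cmod p ^ S N) / (1 - Cmod p))%R with
      (Cmod x * (1 - Cmod p ^ N) / (1 - Cmod p) + Cmod x * Cmod p ^ N)%R by (simpl; field; lra).
    rewrite exp_plus. apply Rmult_le_compat; try apply Cmod_ge_0; auto.
    eapply Rle_trans; [apply Cmod_1_minus_le|]. rewrite Cmod_mult, cpow_Cpow, Cmod_pow.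
    apply exp_ineq1_le.
Qed.

Lemma ppart_bound x p N : (Cmod p < 1)%R ->
  (Cmod (ppart x p N) <= exp (Cmod x / (1 - Cmod p)))%R.
Proof.
  intros Hp. eapply Rle_trans; [apply ppart_bound_aux; auto|].
  pose proof (Cmod_ge_0 p). pose proof (Cmod_ge_0 x).
  pose proof (pow_le (Cmod p) N H).
  apply exp_le_mono. unfold Rdiv. apply Rmult_le_compat_r.
  apply Rlt_le, Rinv_0_lt_compat; lra. nra.
Qed.

Lemma ppart_cv x p : (Cmod p < 1)%R -> cv (ppart x p) (qinf x p).
Proof.
  intros Hp. pose proof (Cmod_ge_0 p).
  destruct (geo_cauchy (ppart x p) (exp (Cmod x / (1 - Cmod p)) * Cmod x) (Cmod p)) as [l [Hl _]].
  - lra.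
  - intros n. rewrite ppart_S.
    replace (ppart x p n * (1 - x * cpow p n) - ppart x p n) with (- (ppart x p n * x * cpow p n)) by ring.
    rewrite Cmod_opp, !Cmod_mult, cpow_Cpow, Cmod_pow.
    pose proof (ppart_bound x p n Hp). pose proof (Cmod_ge_0 x). pose proof (pow_le (Cmod p) n H).
    apply Rmult_le_compat_r; auto. apply Rmult_le_compat_r; auto.
  - unfold qinf. rewrite (cv_lim _ _ Hl). auto.
Qed.

Lemma ppart_shift x p N : ppart x p (S N) = (1 - x) * ppart (x * p) p N.
Proof.
  induction N.
  - simpl. ring.
  - rewrite ppart_S, IHN, ppart_S. simpl. ring.
Qed.

Lemma qinf_shift x p : (Cmod p < 1)%R -> qinf x p = (1 - x) * qinf (x * p) p.
Proof.
  intros Hp. apply (cv_unique (fun N => ppart x p (N + 1)%nat)).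
  - apply cv_shift, ppart_cv; auto.
  - apply (cv_ext (fun N => (1 - x) * ppart (x * p) p N)).
    + intros; rewrite Nat.add_1_r, ppart_shift; auto.
    + apply cv_scal, ppart_cv; auto.
Qed.

Lemma theta_inv (x p : C) : (Cmod p < 1)%R -> x <> 0 -> theta (/ x) p = - / x * theta x p.
Proof.
  intros Hp Hx. unfold theta.
  rewrite (qinf_shift (/ x) p Hp), (qinf_shift x p Hp).
  replace (/ x * p) with (p / x) by (field; auto).
  replace (p / / x) with (x * p) by (field; auto).
  field; auto.
Qed.

Lemma ppart_p0 x N : ppart x 0 (S N) = 1 - x.
Proof.
  induction N. simpl. ring. rewrite ppart_S, IHN. simpl. ring.
Qed.

Lemma qinf_p0 (x : C) : qinf x 0 = 1 - x.
Proof.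
  apply (cv_unique (ppart x 0)). apply ppart_cv. rewrite Cmod_0; lra.
  apply (cv_ext_ev (fun _ => 1 - x) _ _ 1). intros n Hn. destruct n. lia. rewrite ppart_p0; auto.
  apply cv_const.
Qed.

Lemma theta_p0 (x : C) : x <> 0 -> theta x 0 = 1 - x.
Proof.
  intros Hx. unfold theta. rewrite !qinf_p0. replace (0 / x) with (0:C) by (field; auto). ring.
Qed.

Lemma one_minus_ge_exp (s r : R) : (0 <= s <= r)%R -> (r < 1)%R -> (exp (- (s / (1 - r))) <= 1 - s)%R.
Proof.
  intros Hs Hr. pose proof (exp_ineq1_le (s / (1 - r))).
  assert (H1 : (1 <= exp (s / (1 - r)) * (1 - s))%R).
  { assert (1 <= (1 + s / (1 - r)) * (1 - s))%R.
    { replace ((1 + s / (1 - r)) * (1 - s))%R with (1 + s * (r - s) / (1 - r))%R by (field; lra).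
      assert (0 <= s * (r - s) / (1 - r))%R. { apply Rdiv_le_0_compat; nra. } lra. }
    assert (0 <= 1 - s)%R by lra. nra. }
  rewrite exp_Ropp. pose proof (exp_pos (s / (1 - r))).
  apply (Rmult_le_reg_l (exp (s / (1 - r)))); auto. rewrite Rinv_r by lra. lra.
Qed.

Lemma pow_le1 (r : R) n : (0 <= r <= 1)%R -> (r ^ n <= 1)%R.
Proof. intros H; induction n; simpl; [lra|]. pose proof (pow_le r n ltac:(lra)). nra. Qed.

Lemma Qlow_aux p N : (Cmod p < 1)%R ->
  (exp (- (Cmod p * (1 - Cmod p ^ N) / ((1 - Cmod p) * (1 - Cmod p)))) <= Cmod (ppart p p N))%R.
Proof.
  intros Hp. set (r := Cmod p). pose proof (Cmod_ge_0 p). fold r in H, Hp.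
  assert (Hr1 : (1 - r <> 0)%R) by lra.
  induction N.
  - simpl. rewrite Cmod_1. replace (r * (1 - 1) / ((1 - r) * (1 - r)))%R with 0%R by (field; auto).
    rewrite Ropp_0, exp_0. lra.
  - rewrite ppart_S, Cmod_mult.
    replace (- (r * (1 - r ^ S N) / ((1 - r) * (1 - r))))%R with
      (- (r * (1 - r ^ N) / ((1 - r) * (1 - r))) + - (r * r ^ N / (1 - r)))%R by (simpl; field; auto).
    rewrite exp_plus. apply Rmult_le_compat; try (left; apply exp_pos); auto.
    eapply Rle_trans; [|apply Cmod_1_minus_ge]. rewrite Cmod_mult, cpow_Cpow, Cmod_pow. fold r.
    apply one_minus_ge_exp; [|lra]. pose proof (pow_le r N H).
    pose proof (pow_le1 r N ltac:(lra)). split; nra.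
Qed.

Lemma Qlow p N : (Cmod p < 1)%R ->
  (exp (- (Cmod p / ((1 - Cmod p) * (1 - Cmod p)))) <= Cmod (ppart p p N))%R.
Proof.
  intros Hp. eapply Rle_trans; [|apply Qlow_aux; auto].
  pose proof (Cmod_ge_0 p). apply exp_le_mono. apply Ropp_le_contravar.
  pose proof (pow_le (Cmod p) N H). unfold Rdiv. apply Rmult_le_compat_r.
  apply Rlt_le, Rinv_0_lt_compat. nra. nra.
Qed.

Lemma Qinf_nz p : (Cmod p < 1)%R -> qinf p p <> 0.
Proof.
  intros Hp E. set (c := exp (- (Cmod p / ((1 - Cmod p) * (1 - Cmod p))))).
  assert (Hc : (0 < c)%R) by apply exp_pos.
  destruct (ppart_cv p p Hp c Hc) as [N HN]. specialize (HN N (le_n _)).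
  rewrite E in HN. replace (ppart p p N - 0) with (ppart p p N) in HN by ring.
  pose proof (Qlow p N Hp). fold c in H. lra.
Qed.

Lemma csum_ext (f g : nat -> C) n : (forall k, (k <= n)%nat -> f k = g k) -> csum f n = csum g n.
Proof. induction n; intros H; simpl. apply H; lia. rewrite IHn, H; auto. Qed.
Lemma csum_plus (f g : nat -> C) n : csum (fun k => f k + g k) n = csum f n + csum g n.
Proof. induction n; simpl; auto. rewrite IHn; ring. Qed.
Lemma csum_scal c (f : nat -> C) n : csum (fun k => c * f k) n = c * csum f n.
Proof. induction n; simpl; auto. rewrite IHn; ring. Qed.
Lemma csum_first (f : nat -> C) n : csum f (S n) = f O + csum (fun k => f (S k)) n.
Proof. induction n; simpl; auto. simpl in IHn. rewrite IHn; ring. Qed.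
Lemma csum_exchange (a : nat -> nat -> C) n m :
  csum (fun i => csum (fun k => a i k) m) n = csum (fun k => csum (fun i => a i k) n) m.
Proof.
  induction n; simpl. reflexivity. rewrite IHn, <- csum_plus. reflexivity.
Qed.
Lemma Cmod_csum (f : nat -> C) (g : nat -> R) n : (forall k, (k <= n)%nat -> (Cmod (f k) <= g k)%R) ->
  (Cmod (csum f n) <= sum_f_R0 g n)%R.
Proof.
  induction n; intros H; simpl. apply H; lia.
  eapply Rle_trans; [apply Cmod_triangle|]. apply Rplus_le_compat; auto.
Qed.

Lemma abs_nat_opp z : Z.abs_nat (- z) = Z.abs_nat z.
Proof. destruct z; reflexivity. Qed.

Definition sym (f : Z -> C) (i : nat) : C :=
  match i with O => f 0%Z | S _ => f (Z.of_nat i) + f (- Z.of_nat i)%Z end.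
Definition zpart (f : Z -> C) (N : nat) : C := csum (sym f) N.
Definition zsum (f : Z -> C) : C :=
  (real (Lim_seq (fun N => Re (zpart f N))), real (Lim_seq (fun N => Im (zpart f N)))).

Definition dom (f : Z -> C) (c r : R) : Prop :=
  forall j, (Cmod (f j) <= c * r ^ (Z.abs_nat j))%R.

Lemma zpart_S f n : zpart f (S n) = zpart f n + sym f (S n).
Proof. reflexivity. Qed.

Lemma zsum_of_cv f l : cv (zpart f) l -> zsum f = l.
Proof. intros H. unfold zsum. apply cv_lim; auto. Qed.

Lemma zpart_ext (f g : Z -> C) N : (forall j, f j = g j) -> zpart f N = zpart g N.
Proof. intros H. unfold zpart. apply csum_ext. intros [|k] _; simpl; rewrite ?H; auto. Qed.

Lemma zsum_ext (f g : Z -> C) : (forall j, f j = g j) -> zsum f = zsum g.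
Proof.
  intros H. unfold zsum. rewrite (Lim_seq_ext _ (fun N => Re (zpart g N))).
  rewrite (Lim_seq_ext (fun N => Im (zpart f N)) (fun N => Im (zpart g N))). auto.
  intros; rewrite (zpart_ext f g); auto. intros; rewrite (zpart_ext f g); auto.
Qed.

Lemma dom_nonneg f c r : dom f c r -> (0 <= c)%R.
Proof. intros H. specialize (H 0%Z). simpl in H. pose proof (Cmod_ge_0 (f 0%Z)). lra. Qed.

Lemma zsum_cv f c r : (0 <= r < 1)%R -> dom f c r ->
  cv (zpart f) (zsum f) /\ forall N, (Cmod (zsum f - zpart f N) <= 2 * c * r * r ^ N / (1 - r))%R.
Proof.
  intros Hr H. pose proof (dom_nonneg _ _ _ H) as Hc.
  assert (Hs : forall n, (Cmod (zpart f (S n) - zpart f n) <= 2 * c * r * r ^ n)%R).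
  { intros n. rewrite zpart_S.
    replace (zpart f n + sym f (S n) - zpart f n) with (sym f (S n)) by ring.
    unfold sym. eapply Rle_trans; [apply Cmod_triangle|].
    pose proof (H (Z.of_nat (S n))). pose proof (H (- Z.of_nat (S n))%Z).
    rewrite abs_nat_opp in H1. rewrite Zabs2Nat.id in H0, H1. simpl in H0, H1.
    replace (2 * c * r * r ^ n)%R with (c * (r * r ^ n) + c * (r * r ^ n))%R by ring.
    apply Rplus_le_compat; auto. }
  destruct (geo_cauchy (zpart f) (2 * c * r) r Hr Hs) as [l [Hl Hb]].
  rewrite (zsum_of_cv f l Hl). split; auto.
Qed.

Lemma zpart_bound f c r N : (0 <= r < 1)%R -> dom f c r ->
  (Cmod (zpart f N) <= c * (1 + 2 * r / (1 - r)))%R.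
Proof.
  intros Hr H. pose proof (dom_nonneg _ _ _ H) as Hc.
  assert (forall N, Cmod (zpart f N) <= c * (1 + 2 * r * (1 - r ^ N) / (1 - r)))%R.
  { induction N0.
    - unfold zpart; simpl. replace (c * (1 + 2 * r * (1 - 1) / (1 - r)))%R with c by (field; lra).
      specialize (H 0%Z). simpl in H. lra.
    - rewrite zpart_S. eapply Rle_trans; [apply Cmod_triangle|].
      unfold sym. eapply Rle_trans; [apply Rplus_le_compat; [apply IHN0|apply Cmod_triangle]|].
      pose proof (H (Z.of_nat (S N0))). pose proof (H (- Z.of_nat (S N0))%Z).
      rewrite abs_nat_opp in H1. rewrite Zabs2Nat.id in H0, H1.
      change (r ^ S N0) with (r * r ^ N0)%R in H0, H1.
      replace (c * (1 + 2 * r * (1 - r ^ S N0) / (1 - r)))%R with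
        (c * (1 + 2 * r * (1 - r ^ N0) / (1 - r)) + c * (r * r ^ N0) + c * (r * r ^ N0))%R
        by (simpl; field; lra). simpl in *; lra. }
  eapply Rle_trans; [apply H0|]. apply Rmult_le_compat_l; auto.
  pose proof (pow_le r N ltac:(lra)). 
  assert (0 <= 2 * r * r ^ N / (1 - r))%R by (apply Rdiv_le_0_compat; nra).
  replace (2 * r * (1 - r ^ N) / (1 - r))%R with (2 * r / (1 - r) - 2 * r * r ^ N / (1 - r))%R by (field; lra).
  lra.
Qed.

Lemma zsum_bound f c r : (0 <= r < 1)%R -> dom f c r -> (Cmod (zsum f) <= c * (1 + 2 * r / (1 - r)))%R.
Proof.
  intros Hr H. destruct (zsum_cv f c r Hr H) as [Hcv _].
  apply (cv_bound _ _ _ Hcv). intros; apply zpart_bound; auto.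
Qed.

Lemma pow_le_dec (r : R) m n : (0 <= r <= 1)%R -> (m <= n)%nat -> (r ^ n <= r ^ m)%R.
Proof.
  intros Hr Hmn. replace n with (m + (n - m))%nat by lia. rewrite pow_add.
  pose proof (pow_le r m ltac:(lra)). pose proof (pow_le1 r (n - m) Hr).
  pose proof (pow_le r (n - m) ltac:(lra)). nra.
Qed.

Lemma cv_geo0 u (K r : R) : (0 <= r < 1)%R -> (forall n, (Cmod (u n) <= K * r ^ n)%R) -> cv u 0.
Proof.
  intros Hr H eps He.
  destruct (pow_lt_1_zero r ltac:(rewrite Rabs_pos_eq; lra) (eps / (Rabs K + 1))%R) as [N HN].
  { apply Rdiv_lt_0_compat; [lra|]. pose proof (Rabs_pos K); lra. }
  exists N. intros n Hn. specialize (HN n Hn). rewrite Rabs_pos_eq in HN by (apply pow_le; lra).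
  replace (u n - 0) with (u n) by ring. eapply Rle_lt_trans; [apply H|].
  pose proof (Rabs_pos K). pose proof (pow_le r n ltac:(lra)).
  apply (Rmult_lt_compat_l (Rabs K + 1)) in HN; [|lra].
  replace ((Rabs K + 1) * (eps / (Rabs K + 1)))%R with eps in HN by (field; lra).
  pose proof (Rle_abs K). nra.
Qed.

Lemma sym_scal k f i : sym (fun j => k * f j) i = k * sym f i.
Proof. destruct i; simpl; ring. Qed.
Lemma sym_plus f g i : sym (fun j => f j + g j) i = sym f i + sym g i.
Proof. destruct i; simpl; ring. Qed.
Lemma zpart_scal k f N : zpart (fun j => k * f j) N = k * zpart f N.
Proof. unfold zpart. rewrite <- csum_scal. apply csum_ext. intros; apply sym_scal. Qed.
Lemma zpart_plus f g N : zpart (fun j => f j + g j) N = zpart f N + zpart g N.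
Proof. unfold zpart. rewrite <- csum_plus. apply csum_ext. intros; apply sym_plus. Qed.
Lemma zpart_minus f g N : zpart (fun j => f j - g j) N = zpart f N - zpart g N.
Proof.
  rewrite (zpart_ext (fun j => f j - g j) (fun j => f j + (-1) * g j)) by (intros; ring).
  rewrite zpart_plus, zpart_scal. ring.
Qed.

Lemma zsum_ext_part f g : (forall N, zpart f N = zpart g N) -> zsum f = zsum g.
Proof.
  intros H. unfold zsum. rewrite (Lim_seq_ext _ (fun N => Re (zpart g N))).
  rewrite (Lim_seq_ext (fun N => Im (zpart f N)) (fun N => Im (zpart g N))). auto.
  intros; rewrite H; auto. intros; rewrite H; auto.
Qed.

Lemma zsum_scal k f c r : (0 <= r < 1)%R -> dom f c r -> zsum (fun j => k * f j) = k * zsum f.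
Proof.
  intros Hr H. apply zsum_of_cv. apply (cv_ext (fun N => k * zpart f N)).
  intros; rewrite zpart_scal; auto. apply cv_scal. apply (zsum_cv f c r Hr H).
Qed.

Lemma zsum_plus f g c r c' r' : (0 <= r < 1)%R -> dom f c r -> (0 <= r' < 1)%R -> dom g c' r' ->
  zsum (fun j => f j + g j) = zsum f + zsum g.
Proof.
  intros Hr H Hr' H'. apply zsum_of_cv. apply (cv_ext (fun N => zpart f N + zpart g N)).
  intros; rewrite zpart_plus; auto. apply cv_plus. apply (zsum_cv f c r Hr H). apply (zsum_cv g c' r' Hr' H').
Qed.

Lemma zsum_refl f : zsum (fun j => f (- j)%Z) = zsum f.
Proof.
  apply zsum_ext_part. intros N. unfold zpart. apply csum_ext. intros [|k] _; simpl. auto.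
  ring.
Qed.

Lemma zpart_shift1 f N : zpart (fun j => f (j + 1)%Z) N = zpart f N + f (Z.of_nat (S N)) - f (- Z.of_nat N)%Z.
Proof.
  induction N.
  - unfold zpart; simpl. ring.
  - rewrite !zpart_S, IHN. unfold sym.
    replace (Z.of_nat (S N) + 1)%Z with (Z.of_nat (S (S N))) by lia.
    replace (- Z.of_nat (S N) + 1)%Z with (- Z.of_nat N)%Z by lia. ring.
Qed.

Lemma dom_shift f c r s : (0 < r <= 1)%R -> dom f c r -> dom (fun j => f (j + s)%Z) (c / r ^ Z.abs_nat s) r.
Proof.
  intros Hr H j. pose proof (dom_nonneg _ _ _ H). eapply Rle_trans; [apply H|].
  pose proof (pow_lt r (Z.abs_nat s) ltac:(lra)).
  unfold Rdiv. rewrite Rmult_assoc. apply Rmult_le_compat_l; auto.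
  apply (Rmult_le_reg_l (r ^ Z.abs_nat s)); auto.
  rewrite <- Rmult_assoc, Rinv_r, Rmult_1_l by lra. rewrite <- pow_add.
  apply pow_le_dec; [lra|]. lia.
Qed.

Lemma zsum_shift1 f c r : (0 < r < 1)%R -> dom f c r -> zsum (fun j => f (j + 1)%Z) = zsum f.
Proof.
  intros Hr H. apply zsum_of_cv.
  apply (cv_ext (fun N => zpart f N + (f (Z.of_nat (S N)) - f (- Z.of_nat N)%Z))).
  { intros; rewrite zpart_shift1; ring. }
  replace (zsum f) with (zsum f + 0) by ring. apply cv_plus.
  - apply (zsum_cv f c r); auto; lra.
  - apply (cv_geo0 _ (2 * c) r); [lra|]. intros n.
    eapply Rle_trans; [apply Cmod_triangle|]. rewrite Cmod_opp.
    pose proof (H (Z.of_nat (S n))). pose proof (H (- Z.of_nat n)%Z).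
    rewrite abs_nat_opp in H1. rewrite Zabs2Nat.id in H0, H1. rewrite <- tech_pow_Rmult in H0.
    pose proof (pow_le r n ltac:(lra)). pose proof (dom_nonneg _ _ _ H). assert (c * (r * r ^ n) <= c * r ^ n)%R by (apply Rmult_le_compat_l; nra). lra.
Qed.

Lemma zsum_shift_nat k : forall f c r, (0 < r < 1)%R -> dom f c r ->
  zsum (fun j => f (j + Z.of_nat k)%Z) = zsum f.
Proof.
  induction k; intros f c r Hr H.
  - apply zsum_ext. intros; f_equal; lia.
  - rewrite <- (IHk f c r Hr H).
    rewrite <- (zsum_shift1 (fun j => f (j + Z.of_nat k)%Z) (c / r ^ Z.abs_nat (Z.of_nat k)) r Hr).
    + apply zsum_ext; intros; f_equal; lia.
    + apply dom_shift; auto; lra.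
Qed.

Lemma dom_refl f c r : dom f c r -> dom (fun j => f (- j)%Z) c r.
Proof. intros H j. rewrite <- abs_nat_opp. apply H. Qed.

Lemma zsum_shift s f c r : (0 < r < 1)%R -> dom f c r -> zsum (fun j => f (j + s)%Z) = zsum f.
Proof.
  intros Hr H. destruct (Z_le_gt_dec 0 s).
  - replace s with (Z.of_nat (Z.to_nat s)) by lia. apply (zsum_shift_nat _ f c r); auto.
  - rewrite <- (zsum_refl (fun j => f (j + s)%Z)).
    rewrite <- (zsum_refl f).
    rewrite <- (zsum_shift_nat (Z.to_nat (- s)) (fun j => f (- j)%Z) c r Hr (dom_refl _ _ _ H)).
    apply zsum_ext; intros; f_equal; lia.
Qed.

Lemma zpart_evenodd f N :
  zpart (fun k => f (2 * k)%Z) N + zpart (fun k => f (2 * k + 1)%Z) N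
  = zpart f (2 * N + 1) - f (- Z.of_nat (2 * N + 1))%Z.
Proof.
  induction N.
  - unfold zpart; simpl. ring.
  - rewrite !zpart_S. replace (2 * S N + 1)%nat with (S (S (2 * N + 1))) by lia.
    rewrite !zpart_S.
    replace (zpart (fun k : Z => f (2 * k)%Z) N + sym (fun k : Z => f (2 * k)%Z) (S N) +
      (zpart (fun k : Z => f (2 * k + 1)%Z) N + sym (fun k : Z => f (2 * k + 1)%Z) (S N)))
    with ((zpart (fun k : Z => f (2 * k)%Z) N + zpart (fun k : Z => f (2 * k + 1)%Z) N)
          + sym (fun k : Z => f (2 * k)%Z) (S N) + sym (fun k : Z => f (2 * k + 1)%Z) (S N)) by ring.
    rewrite IHN. unfold sym.
    replace (2 * Z.of_nat (S N) + 1)%Z with (Z.of_nat (S (S (2 * N + 1)))) by lia.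
    replace (2 * - Z.of_nat (S N) + 1)%Z with (- Z.of_nat (2 * N + 1))%Z by lia.
    replace (2 * Z.of_nat (S N))%Z with (Z.of_nat (S (2 * N + 1))) by lia.
    replace (2 * - Z.of_nat (S N))%Z with (- Z.of_nat (S (2 * N + 1)))%Z by lia.
    ring.
Qed.

Lemma cv_sub u l : cv u l -> cv (fun N => u (2 * N + 1)%nat) l.
Proof. intros H e He. destruct (H e He) as [N HN]. exists N. intros. apply HN; lia. Qed.

Lemma zsum_evenodd f c r : (0 < r < 1)%R -> dom f c r ->
  zsum f = zsum (fun k => f (2 * k)%Z) + zsum (fun k => f (2 * k + 1)%Z).
Proof.
  intros Hr H. pose proof (dom_nonneg _ _ _ H) as Hc.
  assert (D1 : dom (fun k => f (2 * k)%Z) c r).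
  { intros j. eapply Rle_trans; [apply H|]. apply Rmult_le_compat_l; auto. apply pow_le_dec; [lra|lia]. }
  assert (D2 : dom (fun k => f (2 * k + 1)%Z) c r).
  { intros j. eapply Rle_trans; [apply H|]. apply Rmult_le_compat_l; auto. apply pow_le_dec; [lra|lia]. }
  apply (cv_unique (fun N => zpart (fun k => f (2 * k)%Z) N + zpart (fun k => f (2 * k + 1)%Z) N)).
  - apply (cv_ext (fun N => zpart f (2 * N + 1) - f (- Z.of_nat (2 * N + 1))%Z)).
    { intros; rewrite zpart_evenodd; auto. }
    replace (zsum f) with (zsum f - 0) by ring. apply cv_minus.
    + apply cv_sub. apply (zsum_cv f c r); auto; lra.
    + apply (cv_geo0 _ c r); [lra|]. intros n. eapply Rle_trans; [apply H|].
      apply Rmult_le_compat_l; auto. apply pow_le_dec; [lra|lia].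
  - apply cv_plus. apply (zsum_cv _ c r); auto; lra. apply (zsum_cv _ c r); auto; lra.
Qed.

Lemma sym_csum (g : Z -> nat -> C) N i :
  sym (fun m => csum (g m) N) i = csum (fun k => sym (fun m => g m k) i) N.
Proof. destruct i; simpl. reflexivity. rewrite <- csum_plus. reflexivity. Qed.

Lemma zpart_exchange (w : Z -> Z -> C) N :
  zpart (fun m => zpart (w m) N) N = zpart (fun d => zpart (fun m => w m d) N) N.
Proof.
  unfold zpart. rewrite (csum_ext _ (fun i => csum (fun k => sym (fun m => sym (w m) k) i) N)).
  2: { intros; apply sym_csum. }
  rewrite csum_exchange. apply csum_ext. intros k _.
  rewrite sym_csum. apply csum_ext. intros i _.
  destruct i, k; simpl; ring.
Qed.

Lemma zsum_fubini (w : Z -> Z -> C) c r : (0 < r < 1)%R ->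
  (forall m d, (Cmod (w m d) <= c * r ^ Z.abs_nat m * r ^ Z.abs_nat d)%R) ->
  zsum (fun m => zsum (w m)) = zsum (fun d => zsum (fun m => w m d)).
Proof.
  intros Hr H.
  assert (Hc : (0 <= c)%R).
  { specialize (H 0%Z 0%Z). simpl in H. pose proof (Cmod_ge_0 (w 0%Z 0%Z)). lra. }
  set (B := (1 + 2 * r / (1 - r))%R).
  assert (HB : (0 <= B)%R). { unfold B. assert (0 <= 2 * r / (1 - r))%R by (apply Rdiv_le_0_compat; lra). lra. }
  assert (Dm : forall m, dom (w m) (c * r ^ Z.abs_nat m) r).
  { intros m d. apply H. }
  assert (Dd : forall d, dom (fun m => w m d) (c * r ^ Z.abs_nat d) r).
  { intros d m. replace (c * r ^ Z.abs_nat d * r ^ Z.abs_nat m)%R with (c * r ^ Z.abs_nat m * r ^ Z.abs_nat d)%R by ring. apply H. }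
  assert (DF : dom (fun m => zsum (w m)) (c * B) r).
  { intros m. eapply Rle_trans. apply (zsum_bound _ (c * r ^ Z.abs_nat m) r); [lra|apply Dm]. fold B. right; ring. }
  assert (DG : dom (fun d => zsum (fun m => w m d)) (c * B) r).
  { intros d. eapply Rle_trans. apply (zsum_bound _ (c * r ^ Z.abs_nat d) r); [lra|apply Dd]. fold B. right; ring. }
  set (D := fun N => zpart (fun m => zpart (w m) N) N).
  assert (E1 : cv D (zsum (fun m => zsum (w m)))).
  { apply (cv_ext (fun N => zpart (fun m => zsum (w m)) N - zpart (fun m => zsum (w m) - zpart (w m) N) N)).
    { intros N. rewrite zpart_minus. unfold D. ring. }
    replace (zsum (fun m => zsum (w m))) with (zsum (fun m => zsum (w m)) - 0) by ring.
    apply cv_minus. apply (zsum_cv _ (c * B) r); [lra|apply DF].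
    apply (cv_geo0 _ (2 * c * r / (1 - r) * B) r); [lra|]. intros n.
    eapply Rle_trans. apply (zpart_bound _ (2 * c * r * r ^ n / (1 - r)) r); [lra|].
    { intros m. eapply Rle_trans. apply (zsum_cv _ (c * r ^ Z.abs_nat m) r); [lra|apply Dm]. right. field. lra. }
    fold B. right. field. lra. }
  assert (E2 : cv D (zsum (fun d => zsum (fun m => w m d)))).
  { apply (cv_ext (fun N => zpart (fun d => zsum (fun m => w m d)) N - zpart (fun d => zsum (fun m => w m d) - zpart (fun m => w m d) N) N)).
    { intros N. rewrite zpart_minus. unfold D. rewrite (zpart_exchange w N). ring. }
    replace (zsum (fun d => zsum (fun m => w m d))) with (zsum (fun d => zsum (fun m => w m d)) - 0) by ring.
    apply cv_minus. apply (zsum_cv _ (c * B) r); [lra|apply DG].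
    apply (cv_geo0 _ (2 * c * r / (1 - r) * B) r); [lra|]. intros n.
    eapply Rle_trans. apply (zpart_bound _ (2 * c * r * r ^ n / (1 - r)) r); [lra|].
    { intros m. eapply Rle_trans. apply (zsum_cv _ (c * r ^ Z.abs_nat m) r); [lra|apply Dd]. right. field. lra. }
    fold B. right. field. lra. }
  apply (cv_unique D); auto.
Qed.

Definition zpow (x : C) (j : Z) : C :=
  if (0 <=? j)%Z then x ^ Z.to_nat j else (/ x) ^ Z.to_nat (- j).

Lemma zpow_0 x : zpow x 0 = 1.
Proof. reflexivity. Qed.

Lemma zpow_nat x n : zpow x (Z.of_nat n) = x ^ n.
Proof. unfold zpow. destruct (Z.leb_spec 0 (Z.of_nat n)); [|lia]. rewrite Nat2Z.id. auto. Qed.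

Lemma zpow_succ (x : C) a : x <> 0 -> zpow x (a + 1) = zpow x a * x.
Proof.
  intros Hx. unfold zpow. destruct (Z.leb_spec 0 a); destruct (Z.leb_spec 0 (a + 1)); try lia.
  - replace (Z.to_nat (a + 1)) with (S (Z.to_nat a)) by lia. simpl. ring.
  - assert (a = -1)%Z by lia. subst. simpl. field; auto.
  - replace (Z.to_nat (- a)) with (S (Z.to_nat (- (a + 1)))) by lia. simpl. field; auto.
Qed.

Lemma zpow_pred (x : C) a : x <> 0 -> zpow x (a - 1) = zpow x a / x.
Proof.
  intros Hx. replace (zpow x a) with (zpow x (a - 1 + 1)) by (f_equal; lia).
  rewrite zpow_succ by auto. field; auto.
Qed.

Lemma zpow_add (x : C) a b : x <> 0 -> zpow x (a + b) = zpow x a * zpow x b.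
Proof.
  intros Hx. induction b using Z.peano_ind.
  - rewrite Z.add_0_r, zpow_0. ring.
  - rewrite <- Z.add_1_r, Z.add_assoc, !zpow_succ, IHb by auto. ring.
  - rewrite <- Z.sub_1_r, Z.add_sub_assoc, !zpow_pred, IHb by auto. field; auto.
Qed.

Lemma C1_nz : RtoC 1 <> RtoC 0.
Proof. intros E. injection E. lra. Qed.

Lemma Cinv_nz (x : C) : x <> 0 -> / x <> 0.
Proof. intros Hx E. assert (x * / x = 1) by (apply Cinv_r; auto). rewrite E in H.
  replace (x * 0) with (RtoC 0) in H by ring. apply C1_nz. auto. Qed.

Lemma zpow_nz (x : C) a : x <> 0 -> zpow x a <> 0.
Proof.
  intros Hx. unfold zpow. destruct (0 <=? a)%Z; apply Cpow_nz; auto. apply Cinv_nz; auto.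
Qed.

Lemma zpow_opp (x : C) a : x <> 0 -> zpow x (- a) = / zpow x a.
Proof.
  intros Hx. assert (zpow x a * zpow x (- a) = 1).
  { rewrite <- zpow_add by auto. replace (a + - a)%Z with 0%Z by lia. auto. }
  pose proof (zpow_nz x a Hx). field_simplify_eq; auto. rewrite <- H. ring.
Qed.

Lemma zpow_mulbase (x y : C) a : x <> 0 -> y <> 0 -> zpow (x * y) a = zpow x a * zpow y a.
Proof.
  intros Hx Hy. assert (Hxy : x * y <> 0) by (apply Cmult_neq_0; auto).
  induction a using Z.peano_ind.
  - rewrite !zpow_0; ring.
  - rewrite <- Z.add_1_r, !zpow_succ, IHa by auto. ring.
  - rewrite <- Z.sub_1_r, !zpow_pred, IHa by auto. field; auto.
Qed.

Lemma zpow_invbase (x : C) a : x <> 0 -> zpow (/ x) a = / zpow x a.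
Proof.
  intros Hx. pose proof (Cinv_nz x Hx).
  induction a using Z.peano_ind.
  - rewrite !zpow_0. field.
  - rewrite <- Z.add_1_r, !zpow_succ, IHa by auto. pose proof (zpow_nz x a Hx). field; auto.
  - rewrite <- Z.sub_1_r, !zpow_pred, IHa by auto. pose proof (zpow_nz x a Hx). field; auto.
Qed.

Lemma zpow_1 (x : C) : zpow x 1 = x.
Proof. unfold zpow. simpl. ring. Qed.

Lemma Cmod_zpow_le (x : C) j : x <> 0 -> (Cmod (zpow x j) <= (Cmod x + / Cmod x) ^ Z.abs_nat j)%R.
Proof.
  intros Hx. pose proof (proj1 (Cmod_gt_0 x) Hx) as Hm.
  pose proof (Rinv_0_lt_compat _ Hm).
  unfold zpow. destruct (Z.leb_spec 0 j).
  - rewrite Cmod_pow. replace (Z.to_nat j) with (Z.abs_nat j) by lia.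
    apply pow_incr. split; [apply Cmod_ge_0|lra].
  - rewrite Cmod_pow, Cmod_inv by auto. replace (Z.to_nat (- j)) with (Z.abs_nat j) by lia.
    apply pow_incr. lra.
Qed.

Lemma Cmod_zpow_nonneg (x : C) e : (0 <= e)%Z -> Cmod (zpow x e) = (Cmod x ^ Z.to_nat e)%R.
Proof. intros H. unfold zpow. destruct (Z.leb_spec 0 e); [|lia]. apply Cmod_pow. Qed.

Definition tri (j : Z) : Z := (j * (j - 1) / 2)%Z.
Lemma tri_spec j : (2 * tri j = j * (j - 1))%Z.
Proof.
  unfold tri. destruct (Z.Even_or_Odd j) as [[k Hk]|[k Hk]]; subst.
  - replace (2 * k * (2 * k - 1))%Z with ((k * (2 * k - 1)) * 2)%Z by ring.
    rewrite Z.div_mul by lia. ring.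
  - replace ((2 * k + 1) * (2 * k + 1 - 1))%Z with ((k * (2 * k + 1)) * 2)%Z by ring.
    rewrite Z.div_mul by lia. ring.
Qed.
Lemma tri_nonneg j : (0 <= tri j)%Z.
Proof. pose proof (tri_spec j). nia. Qed.

Fixpoint trin (n : nat) : nat := match n with O => O | S m => (trin m + m)%nat end.
Lemma trin_spec n : (2 * Z.of_nat (trin n) = Z.of_nat n * (Z.of_nat n - 1))%Z.
Proof. induction n; simpl trin; [reflexivity|]. rewrite Nat2Z.inj_add, Nat2Z.inj_succ. lia. Qed.

Lemma gauss_bound (r a rho : R) : (0 <= r < 1)%R -> (0 < a)%R -> (0 < rho)%R ->
  exists C, forall n, (r ^ trin n * a ^ n <= C * rho ^ n)%R.
Proof.
  intros Hr Ha Hrho. set (b := (a / rho)%R).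
  assert (Hb : (0 < b)%R) by (unfold b; apply Rdiv_lt_0_compat; auto).
  set (s := fun n => (r ^ trin n * b ^ n)%R).
  assert (Hs : forall n, (0 <= s n)%R). { intros; unfold s. apply Rmult_le_pos; apply pow_le; lra. }
  destruct (pow_lt_1_zero r ltac:(rewrite Rabs_pos_eq; lra) (/ b)%R ltac:(apply Rinv_0_lt_compat; auto))
    as [N HN].
  assert (Hdec : forall n, (N <= n)%nat -> (s (S n) <= s n)%R).
  { intros n Hn. specialize (HN n Hn). rewrite Rabs_pos_eq in HN by (apply pow_le; lra).
    unfold s. simpl trin. rewrite pow_add. simpl pow at 3.
    replace (r ^ trin n * r ^ n * (b * b ^ n))%R with ((r ^ trin n * b ^ n) * (r ^ n * b))%R by ring.
    fold (s n). pose proof (Hs n).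
    assert (r ^ n * b <= 1)%R. { apply (Rmult_lt_compat_r b) in HN; auto. rewrite Rinv_l in HN by lra. lra. }
    rewrite <- (Rmult_1_r (s n)) at 2. apply Rmult_le_compat_l; auto. }
  set (C0 := sum_f_R0 s N).
  assert (Hsum : forall n, (n <= N)%nat -> (s n <= C0)%R).
  { intros n Hn. unfold C0. clear -Hs Hn. induction N.
    - replace n with O by lia. simpl. lra.
    - simpl. destruct (Nat.eq_dec n (S N)). subst. 
      assert (0 <= sum_f_R0 s N)%R. { apply cond_pos_sum; auto. } lra.
      pose proof (Hs (S N)). assert (s n <= sum_f_R0 s N)%R by (apply IHN; lia). lra. }
  assert (Hall : forall n, (s n <= C0)%R).
  { induction n. apply Hsum; lia. destruct (le_lt_dec (S n) N). apply Hsum; auto.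
    eapply Rle_trans; [apply Hdec; lia|auto]. }
  exists C0. intros n. specialize (Hall n). unfold s, b in Hall.
  unfold Rdiv in Hall. rewrite Rpow_mult_distr, pow_inv in Hall.
  pose proof (pow_lt rho n Hrho).
  apply (Rmult_le_compat_r (rho ^ n)) in Hall; [|lra].
  rewrite !Rmult_assoc, Rinv_l, Rmult_1_r in Hall by lra. lra.
Qed.

Lemma gauss_dom (p : C) (f : Z -> C) (a rho : R) : (Cmod p < 1)%R -> (0 < a)%R -> (0 < rho)%R ->
  (forall j, (Cmod (f j) <= Cmod p ^ trin (Z.abs_nat j) * a ^ Z.abs_nat j)%R) ->
  exists C, dom f C rho.
Proof.
  intros Hp Ha Hrho H. pose proof (Cmod_ge_0 p).
  destruct (gauss_bound (Cmod p) a rho ltac:(lra) Ha Hrho) as [C HC].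
  exists C. intros j. eapply Rle_trans; [apply H|apply HC].
Qed.

Lemma pow_le_exp (r : R) (e : Z) n : (0 <= r <= 1)%R -> (Z.of_nat n <= e)%Z -> (r ^ Z.to_nat e <= r ^ n)%R.
Proof. intros. apply pow_le_dec; auto. lia. Qed.


Definition tt (p A : C) (j : Z) : C := zpow (-1) j * zpow p (tri j) * zpow A j.
Definition TT p A := zsum (tt p A).
Definition h0t (p z : C) (k : Z) : C := zpow p (k * k) * zpow z k.
Definition h1t (p z : C) (k : Z) : C := zpow p (k * k + k) * zpow z k.
Definition et (p z : C) (k : Z) : C := zpow p (k * k - k) * zpow z k.
Definition TH0 p z := zsum (h0t p z).
Definition TH1 p z := zsum (h1t p z).
Definition EE p z := zsum (et p z).

Lemma Cmod_m1 : Cmod (-1) = 1%R.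
Proof. rewrite Cmod_R. rewrite Rabs_left by lra. lra. Qed.
Lemma m1_nz : (-1 : C) <> 0.
Proof. intros E. injection E. lra. Qed.

Lemma Cmod_zpow_m1 j : Cmod (zpow (-1) j) = 1%R.
Proof.
  unfold zpow. destruct (0 <=? j)%Z; rewrite Cmod_pow; [rewrite Cmod_m1|rewrite Cmod_inv, Cmod_m1 by apply m1_nz];
  rewrite ?Rinv_1; apply pow1.
Qed.

Lemma dom_pz (p z : C) (e : Z -> Z) (s : Z -> C) rho : (Cmod p < 1)%R -> z <> 0 -> (0 < rho)%R ->
  (forall j, Z.of_nat (trin (Z.abs_nat j)) <= e j)%Z -> (forall j, (Cmod (s j) <= 1)%R) ->
  exists C, dom (fun j => s j * zpow p (e j) * zpow z j) C rho.
Proof.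
  intros Hp Hz Hrho He Hs. pose proof (proj1 (Cmod_gt_0 z) Hz) as Hm.
  apply (gauss_dom p _ (Cmod z + / Cmod z)); auto.
  { pose proof (Rinv_0_lt_compat _ Hm). lra. }
  intros j. rewrite !Cmod_mult. rewrite Cmod_zpow_nonneg.
  2: { specialize (He j). lia. }
  pose proof (Cmod_ge_0 p). pose proof (Cmod_ge_0 (s j)).
  pose proof (pow_le (Cmod p) (Z.to_nat (e j)) H).
  pose proof (Cmod_zpow_le z j Hz). pose proof (Cmod_ge_0 (zpow z j)).
  assert (Cmod p ^ Z.to_nat (e j) <= Cmod p ^ trin (Z.abs_nat j))%R.
  { apply pow_le_dec. lra. specialize (He j). lia. }
  specialize (Hs j). pose proof (pow_le (Cmod p) (trin (Z.abs_nat j)) H).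
  apply Rmult_le_compat; try nra.
Qed.

Lemma trin_abs_le j : (Z.of_nat (trin (Z.abs_nat j)) <= j * j - j)%Z /\
  (Z.of_nat (trin (Z.abs_nat j)) <= j * j)%Z /\ (Z.of_nat (trin (Z.abs_nat j)) <= j * j + j)%Z /\
  (Z.of_nat (trin (Z.abs_nat j)) <= tri j)%Z.
Proof.
  pose proof (trin_spec (Z.abs_nat j)). pose proof (tri_spec j).
  rewrite Nat2Z.inj_abs_nat in H.
  destruct (Z_le_gt_dec 0 j); [rewrite Z.abs_eq in H by lia|rewrite Z.abs_neq in H by lia];
  repeat split; nia.
Qed.


Lemma dom_tt (p : C) (Hp : (Cmod p < 1)%R) (A : C) rho : A <> 0 -> (0 < rho)%R -> exists C, dom (tt p A) C rho.
Proof.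
  intros HA Hr. destruct (dom_pz p A tri (zpow (-1)) rho Hp HA Hr) as [C HC].
  - intros; apply trin_abs_le.
  - intros; rewrite Cmod_zpow_m1; lra.
  - exists C. exact HC.
Qed.

Lemma dom_h0t (p : C) (Hp : (Cmod p < 1)%R) (z : C) rho : z <> 0 -> (0 < rho)%R -> exists C, dom (h0t p z) C rho.
Proof.
  intros HA Hr. destruct (dom_pz p z (fun k => k * k)%Z (fun _ => 1) rho Hp HA Hr) as [C HC].
  - intros; apply trin_abs_le.
  - intros; rewrite Cmod_1; lra.
  - exists C. intros j. unfold h0t. rewrite <- (Cmult_1_l (zpow p (j * j))). apply HC.
Qed.

Lemma dom_h1t (p : C) (Hp : (Cmod p < 1)%R) (z : C) rho : z <> 0 -> (0 < rho)%R -> exists C, dom (h1t p z) C rho.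
Proof.
  intros HA Hr. destruct (dom_pz p z (fun k => k * k + k)%Z (fun _ => 1) rho Hp HA Hr) as [C HC].
  - intros; apply trin_abs_le.
  - intros; rewrite Cmod_1; lra.
  - exists C. intros j. unfold h1t. rewrite <- (Cmult_1_l (zpow p (j * j + j))). apply HC.
Qed.

Lemma dom_et (p : C) (Hp : (Cmod p < 1)%R) (z : C) rho : z <> 0 -> (0 < rho)%R -> exists C, dom (et p z) C rho.
Proof.
  intros HA Hr. destruct (dom_pz p z (fun k => k * k - k)%Z (fun _ => 1) rho Hp HA Hr) as [C HC].
  - intros; apply trin_abs_le.
  - intros; rewrite Cmod_1; lra.
  - exists C. intros j. unfold et. rewrite <- (Cmult_1_l (zpow p (j * j - j))). apply HC.
Qed.


Lemma zpow_one k : zpow 1 k = 1.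
Proof.
  assert (H1 : (1 : C) <> 0) by apply C1_nz.
  induction k using Z.peano_ind. reflexivity.
  rewrite <- Z.add_1_r, zpow_succ, IHk by auto. ring.
  rewrite <- Z.sub_1_r, zpow_pred, IHk by auto. field.
Qed.

Lemma zpow_m1_even k : zpow (-1) (2 * k) = 1.
Proof.
  replace (2 * k)%Z with (k + k)%Z by lia. rewrite zpow_add by apply m1_nz.
  rewrite <- zpow_mulbase by apply m1_nz. replace ((-1) * (-1) : C) with (1 : C) by ring.
  apply zpow_one.
Qed.

Lemma zpow_div (A B : C) a : A <> 0 -> B <> 0 -> zpow (A / B) a = zpow A a * / zpow B a.
Proof. intros. unfold Cdiv. rewrite zpow_mulbase, zpow_invbase; auto. apply Cinv_nz; auto. Qed.

Lemma zpow_ext x a b : a = b -> zpow x a = zpow x b.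
Proof. intros; subst; auto. Qed.

Ltac trispec := repeat match goal with |- context [tri ?x] =>
  let H := fresh in pose proof (tri_spec x) as H; revert H; generalize (tri x); intros end.

Lemma I1 (p A B : C) k e : p <> 0 -> A <> 0 -> B <> 0 ->
  tt p A (k + e) * tt p B (k + e - 2 * e) = (zpow p (e * e) * zpow (A / B) e) * et p (A * B) k.
Proof.
  intros Hp HA HB. unfold tt, et.
  pose proof m1_nz as Hm.
  rewrite (zpow_ext (-1) (k + e) (- (k + e - 2 * e) + 2 * k)) by lia.
  rewrite zpow_add, zpow_opp, zpow_m1_even by auto.
  rewrite (zpow_ext p (tri (k + e)) ((e * e + (k * k - k)) + - tri (k + e - 2 * e))).
  2: { pose proof (tri_spec (k + e)). pose proof (tri_spec (k + e - 2 * e)). nia. }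
  rewrite !zpow_add, zpow_opp by auto.
  rewrite (zpow_ext B (k + e - 2 * e) (k + - e)) by lia.
  rewrite !zpow_add, zpow_opp by auto.
  rewrite zpow_div, zpow_mulbase by auto.
  pose proof (zpow_nz (-1) (k + e - 2 * e) Hm).
  pose proof (zpow_nz p (tri (k + e - 2 * e)) Hp).
  pose proof (zpow_nz B e HB).
  field. auto.
Qed.

Lemma I2 (p A B : C) k e : p <> 0 -> A <> 0 -> B <> 0 ->
  tt p A (k + (e + 1)) * tt p B (k + (e + 1) - (2 * e + 1)) = (- A * h1t p (A / B) e) * h0t p (A * B) k.
Proof.
  intros Hp HA HB. unfold tt, h1t, h0t.
  pose proof m1_nz as Hm.
  rewrite (zpow_ext (-1) (k + (e + 1)) (- (k + (e + 1) - (2 * e + 1)) + 2 * k + 1)) by lia.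
  rewrite !zpow_add, zpow_opp, zpow_m1_even, zpow_1 by auto.
  rewrite (zpow_ext p (tri (k + (e + 1))) ((e * e + e + k * k) + - tri (k + (e + 1) - (2 * e + 1)))).
  2: { pose proof (tri_spec (k + (e + 1))). pose proof (tri_spec (k + (e + 1) - (2 * e + 1))). nia. }
  rewrite !zpow_add, zpow_opp by auto.
  rewrite (zpow_ext B (k + (e + 1) - (2 * e + 1)) (k + - e)) by lia.
  rewrite !zpow_add, zpow_opp, zpow_1 by auto.
  rewrite zpow_div, zpow_mulbase by auto.
  pose proof (zpow_nz (-1) (k + (e + 1) - (2 * e + 1)) Hm).
  pose proof (zpow_nz p (tri (k + (e + 1) - (2 * e + 1))) Hp).
  pose proof (zpow_nz B e HB).
  field. auto.
Qed.

Lemma I3 (p X : C) k : p <> 0 -> X <> 0 -> et p X (k + 1) = X * h1t p X k.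
Proof.
  intros Hp HX. unfold et, h1t.
  rewrite (zpow_ext p ((k + 1) * (k + 1) - (k + 1)) (k * k + k)) by lia.
  rewrite zpow_succ by auto. ring.
Qed.

Lemma zsum_reflshift g c r m : (0 < r < 1)%R -> dom g c r -> zsum (fun d => g (m - d)%Z) = zsum g.
Proof.
  intros Hr H.
  rewrite (zsum_ext _ (fun d => (fun j => g (- j)%Z) (d + - m)%Z)) by (intros; f_equal; lia).
  rewrite (zsum_shift (- m) (fun j => g (- j)%Z) c r Hr (dom_refl _ _ _ H)).
  apply zsum_refl.
Qed.

Lemma dom_scal k f c r : dom f c r -> dom (fun j => k * f j) (Cmod k * c) r.
Proof.
  intros H j. rewrite Cmod_mult, Rmult_assoc. apply Rmult_le_compat_l; auto. apply Cmod_ge_0.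
Qed.

Lemma decomp (p A B : C) : p <> 0 -> (Cmod p < 1)%R -> A <> 0 -> B <> 0 ->
  TT p A * TT p B = A * B * TH1 p (A * B) * TH0 p (A / B) - A * TH0 p (A * B) * TH1 p (A / B).
Proof.
  intros Hp0 Hp HA HB.
  set (r := (/ 2)%R). assert (Hr : (0 < r < 1)%R) by (unfold r; lra).
  assert (Hrho : (0 < r * r)%R) by nra.
  destruct (dom_tt p Hp A (r * r) HA Hrho) as [CA DA].
  destruct (dom_tt p Hp B (r * r) HB Hrho) as [CB DB].
  pose proof (dom_nonneg _ _ _ DA) as HCA. pose proof (dom_nonneg _ _ _ DB) as HCB.
  assert (Hrr : (0 < r * r < 1)%R) by nra.
  set (W := fun m d => tt p A m * tt p B (m - d)%Z).
  assert (S1 : TT p A * TT p B = zsum (fun m => zsum (W m))).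
  { rewrite Cmult_comm. unfold TT at 2. rewrite <- (zsum_scal (TT p B) (tt p A) CA (r * r)) by (auto; lra).
    apply zsum_ext. intros m. unfold TT.
    rewrite Cmult_comm, <- (zsum_scal (tt p A m) (tt p B) CB (r * r)) by (auto; lra).
    unfold W. symmetry.
    apply (zsum_reflshift (fun n => tt p A m * tt p B n) (Cmod (tt p A m) * CB) (r * r)); auto.
    apply dom_scal; auto. }
  assert (WB : forall m d, (Cmod (W m d) <= CA * CB * r ^ Z.abs_nat m * r ^ Z.abs_nat d)%R).
  { intros m d. unfold W. rewrite Cmod_mult.
    eapply Rle_trans. apply Rmult_le_compat; try apply Cmod_ge_0; [apply DA|apply DB].
    replace ((r * r) ^ Z.abs_nat m)%R with (r ^ (2 * Z.abs_nat m))%R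
      by (rewrite Rpow_mult_distr, <- pow_add; f_equal; lia).
    replace ((r * r) ^ Z.abs_nat (m - d))%R with (r ^ (2 * Z.abs_nat (m - d)))%R
      by (rewrite Rpow_mult_distr, <- pow_add; f_equal; lia).
    assert (Hq : (r ^ (2 * Z.abs_nat m) * r ^ (2 * Z.abs_nat (m - d)) <= r ^ Z.abs_nat m * r ^ Z.abs_nat d)%R).
    { rewrite <- !pow_add. apply pow_le_dec; [lra|lia]. }
    replace (CA * r ^ (2 * Z.abs_nat m) * (CB * r ^ (2 * Z.abs_nat (m - d))))%R with
      (CA * CB * (r ^ (2 * Z.abs_nat m) * r ^ (2 * Z.abs_nat (m - d))))%R by ring.
    rewrite !Rmult_assoc. apply Rmult_le_compat_l; auto. apply Rmult_le_compat_l; auto. }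
  assert (DW : forall d, dom (fun m => W m d) (CA * CB * r ^ Z.abs_nat d) r).
  { intros d m. eapply Rle_trans; [apply WB|]. right; ring. }
  rewrite S1, (zsum_fubini W (CA * CB) r Hr) by (intros; apply WB).
  set (Bc := (1 + 2 * r / (1 - r))%R).
  assert (DF : dom (fun d => zsum (fun m => W m d)) (CA * CB * Bc) r).
  { intros d. eapply Rle_trans. apply (zsum_bound _ (CA * CB * r ^ Z.abs_nat d) r); [lra|apply DW].
    fold Bc. right; ring. }
  rewrite (zsum_evenodd _ _ _ Hr DF).
  set (X := A * B). set (Y := A / B).
  assert (HX : X <> 0) by (apply Cmult_neq_0; auto).
  assert (HY : Y <> 0) by (unfold Y, Cdiv; apply Cmult_neq_0; auto; apply Cinv_nz; auto).
  destruct (dom_et p Hp X r HX ltac:(lra)) as [CE DE].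
  destruct (dom_h0t p Hp X r HX ltac:(lra)) as [C0X D0X].
  destruct (dom_h0t p Hp Y r HY ltac:(lra)) as [C0Y D0Y].
  destruct (dom_h1t p Hp X r HX ltac:(lra)) as [C1X D1X].
  destruct (dom_h1t p Hp Y r HY ltac:(lra)) as [C1Y D1Y].
  assert (EV : zsum (fun e => zsum (fun m => W m (2 * e)%Z)) = EE p X * TH0 p Y).
  { rewrite (zsum_ext _ (fun e => EE p X * h0t p Y e)).
    - unfold TH0. apply (zsum_scal _ _ C0Y r); auto; lra.
    - intros e. rewrite <- (zsum_shift e _ _ r Hr (DW (2 * e)%Z)).
      rewrite (zsum_ext _ (fun k => h0t p Y e * et p X k)).
      + unfold EE. rewrite (zsum_scal _ _ CE r); auto; [ring|lra].
      + intros k. unfold W. rewrite I1 by auto. unfold h0t. auto. }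
  assert (OD : zsum (fun e => zsum (fun m => W m (2 * e + 1)%Z)) = - A * TH0 p X * TH1 p Y).
  { rewrite (zsum_ext _ (fun e => (- A * TH0 p X) * h1t p Y e)).
    - unfold TH1. apply (zsum_scal _ _ C1Y r); auto; lra.
    - intros e. rewrite <- (zsum_shift (e + 1) _ _ r Hr (DW (2 * e + 1)%Z)).
      rewrite (zsum_ext _ (fun k => (- A * h1t p Y e) * h0t p X k)).
      + unfold TH0. rewrite (zsum_scal _ _ C0X r); auto; [ring|lra].
      + intros k. unfold W. rewrite I2 by auto. auto. }
  assert (EX : EE p X = X * TH1 p X).
  { unfold EE. rewrite <- (zsum_shift 1 _ _ r Hr DE).
    rewrite (zsum_ext _ (fun k => X * h1t p X k)). unfold TH1. apply (zsum_scal _ _ C1X r); auto; lra.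
    intros k. apply I3; auto. }
  rewrite EV, OD, EX. unfold X, Y. ring.
Qed.

Lemma tail_bound (f : nat -> C) (L r : R) J N : (0 <= r < 1)%R -> (0 <= L)%R -> (J <= N)%nat ->
  (forall i, (J < i)%nat -> (i <= N)%nat -> (Cmod (f i) <= L * r ^ i)%R) ->
  (Cmod (csum f N - csum f J) <= L * r ^ (S J) / (1 - r))%R.
Proof.
  intros Hr HL HJN H.
  assert (G : forall d, (J + d <= N)%nat ->
    (Cmod (csum f (J + d) - csum f J) <= L * (r ^ (S J) - r ^ (S (J + d))) / (1 - r))%R).
  { induction d; intros Hd.
    - rewrite Nat.add_0_r. replace (csum f J - csum f J) with (0:C) by ring. rewrite Cmod_0.
      right. field. lra.
    - rewrite Nat.add_succ_r. simpl csum.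
      replace (csum f (J + d) + f (S (J + d)) - csum f J) with
        ((csum f (J + d) - csum f J) + f (S (J + d))) by ring.
      eapply Rle_trans; [apply Cmod_triangle|].
      eapply Rle_trans; [apply Rplus_le_compat; [apply IHd; lia|apply H; lia]|].
      right. simpl. field. lra. }
  replace N with (J + (N - J))%nat by lia.
  eapply Rle_trans; [apply G; lia|]. unfold Rdiv. apply Rmult_le_compat_r.
  apply Rlt_le, Rinv_0_lt_compat; lra. pose proof (pow_le r (S (J + (N - J))) ltac:(lra)). nra.
Qed.

Lemma cv_csum_fixed (u : nat -> nat -> C) (l : nat -> C) J :
  (forall i, cv (u i) (l i)) -> cv (fun N => csum (fun i => u i N) J) (csum l J).
Proof.
  induction J; intros H; simpl. apply H. apply cv_plus; auto.
Qed.

Lemma tannery (a : nat -> C) (b : nat -> nat -> C) (K r M : R) (beta Ssum : C) :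
  (0 <= r < 1)%R -> (forall i, (Cmod (a i) <= K * r ^ i)%R) ->
  (forall N i, (i <= N)%nat -> (Cmod (b N i) <= M)%R) -> (forall i, cv (fun N => b N i) beta) ->
  cv (csum a) Ssum -> cv (fun N => csum (fun i => a i * b N i) N) (beta * Ssum).
Proof.
  intros Hr Ha Hb Hbeta HS eps He.
  assert (HK : (0 <= K)%R). { specialize (Ha O). simpl in Ha. pose proof (Cmod_ge_0 (a O)). lra. }
  assert (HM : (0 <= M)%R). { specialize (Hb O O (le_n _)). pose proof (Cmod_ge_0 (b O O)). lra. }
  set (M' := (M + Cmod beta)%R). assert (HM' : (0 <= M')%R) by (unfold M'; pose proof (Cmod_ge_0 beta); lra).
  destruct (pow_lt_1_zero r ltac:(rewrite Rabs_pos_eq; lra) (eps / 3 * (1 - r) / (K * M' + 1))%R) as [J HJ].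
  { apply Rdiv_lt_0_compat; [|nra]. apply Rmult_lt_0_compat; lra. }
  assert (HJ' : (K * M' * r ^ S J / (1 - r) < eps / 3)%R).
  { specialize (HJ (S J) ltac:(lia)). rewrite Rabs_pos_eq in HJ by (apply pow_le; lra).
    apply (Rmult_lt_reg_r (1 - r)); [lra|]. unfold Rdiv. rewrite Rmult_assoc, Rinv_l, Rmult_1_r by lra.
    pose proof (pow_le r (S J) ltac:(lra)).
    apply (Rmult_lt_compat_l (K * M' + 1)) in HJ; [|nra].
    replace ((K * M' + 1) * (eps / 3 * (1 - r) / (K * M' + 1)))%R with (eps / 3 * (1 - r))%R in HJ
      by (field; nra). nra. }
  assert (Hhead : cv (fun N => csum (fun i => a i * (b N i - beta)) J) 0).
  { replace (RtoC 0) with (csum (fun _ => RtoC 0) J).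
    2: { clear. induction J; simpl; auto. rewrite IHJ. ring. }
    apply (cv_csum_fixed (fun i N => a i * (b N i - beta))). intros i.
    replace (RtoC 0) with (a i * (beta - beta)) by ring. apply cv_scal. apply cv_minus; auto. apply cv_const. }
  destruct (Hhead (eps / 3)%R ltac:(lra)) as [N1 HN1].
  assert (Hthird : cv (fun N => beta * (csum a N - Ssum)) 0).
  { replace (RtoC 0) with (beta * (Ssum - Ssum)) by ring. apply cv_scal. apply cv_minus; auto. apply cv_const. }
  destruct (Hthird (eps / 3)%R ltac:(lra)) as [N2 HN2].
  exists (max J (max N1 N2)). intros N HN.
  specialize (HN1 N ltac:(lia)). specialize (HN2 N ltac:(lia)).
  replace (csum (fun i => a i * b N i) N - beta * Ssum) with
    ((csum (fun i => a i * (b N i - beta)) J - 0) +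
     (csum (fun i => a i * (b N i - beta)) N - csum (fun i => a i * (b N i - beta)) J) +
     (beta * (csum a N - Ssum) - 0)).
  2: { replace (csum (fun i => a i * b N i) N) with
         (csum (fun i => a i * (b N i - beta)) N + beta * csum a N).
       ring. rewrite <- csum_scal, <- csum_plus. apply csum_ext. intros; ring. }
  eapply Rle_lt_trans; [apply Cmod_triangle|].
  eapply Rle_lt_trans; [apply Rplus_le_compat_r; apply Cmod_triangle|].
  assert (Htail : Rle (Cmod (csum (fun i => a i * (b N i - beta)) N - csum (fun i => a i * (b N i - beta)) J))
     (K * M' * r ^ S J / (1 - r))%R).
  { apply tail_bound; auto; [nra|lia|]. intros i Hi1 Hi2. rewrite Cmod_mult.
    replace (K * M' * r ^ i)%R with (K * r ^ i * M')%R by ring.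
    apply Rmult_le_compat; try apply Cmod_ge_0; auto.
    eapply Rle_trans; [apply Cmod_triangle|]. rewrite Cmod_opp. unfold M'.
    specialize (Hb N i Hi2). lra. }
  lra.
Qed.


Definition Qp (p : C) n := ppart p p n.

Lemma Qp_nz (p : C) (Hp : (Cmod p < 1)%R) n : Qp p n <> 0.
Proof.
  intros E. pose proof (Qlow p n Hp). unfold Qp in E. rewrite E, Cmod_0 in H.
  pose proof (exp_pos (- (Cmod p / ((1 - Cmod p) * (1 - Cmod p))))). lra.
Qed.

Lemma Qp_S (p : C) n : Qp p (S n) = Qp p n * (1 - p ^ (S n)).
Proof. unfold Qp. rewrite ppart_S, cpow_Cpow. simpl. ring. Qed.

Lemma Qp_0 (p : C) : Qp p 0 = 1.
Proof. reflexivity. Qed.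

Definition Gb (p : C) M i := if (i <=? M)%nat then Qp p M / (Qp p i * Qp p (M - i)) else 0.

Lemma rothe_pt (p : C) (Hp : (Cmod p < 1)%R) (w : C) M k : (k <= M)%nat ->
  Gb p (S M) (S k) * p ^ trin (S k) * (- w) ^ (S k) =
  Gb p M (S k) * p ^ trin (S k) * (- w) ^ (S k) + (- w) * p ^ M * (Gb p M k * p ^ trin k * (- w) ^ k).
Proof.
  intros Hk. simpl trin. rewrite Cpow_add_r, !Cpow_S.
  destruct (Nat.eq_dec k M) as [->|Hne].
  - unfold Gb. rewrite !Nat.leb_refl. replace (S M <=? M)%nat with false by (symmetry; apply Nat.leb_gt; lia).
    replace (S M <=? S M)%nat with true by (symmetry; apply Nat.leb_le; lia).
    rewrite !Nat.sub_diag, Qp_0. pose proof (Qp_nz p Hp M). pose proof (Qp_nz p Hp (S M)).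
    field. split; auto.
  - destruct (Nat.le_exists_sub (S k) M ltac:(lia)) as [d [Hd _]]. subst M.
    unfold Gb.
    replace (S k <=? S (d + S k))%nat with true by (symmetry; apply Nat.leb_le; lia).
    replace (S k <=? d + S k)%nat with true by (symmetry; apply Nat.leb_le; lia).
    replace (k <=? d + S k)%nat with true by (symmetry; apply Nat.leb_le; lia).
    replace (S (d + S k) - S k)%nat with (S d) by lia.
    replace (d + S k - S k)%nat with d by lia.
    replace (d + S k - k)%nat with (S d) by lia.
    pose proof (Qp_nz p Hp k) as N1. pose proof (Qp_nz p Hp d) as N2. pose proof (Qp_nz p Hp (d + S k)) as N3.
    pose proof (Qp_nz p Hp (S k)) as N4. pose proof (Qp_nz p Hp (S d)) as N5.
    rewrite !Qp_S in *. 
    rewrite (Cpow_add_r p d (S k)), !Cpow_S in *.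
    assert (A1 : 1 - p * p ^ k <> 0) by (intro E; apply N4; rewrite E; ring).
    assert (A2 : 1 - p * p ^ d <> 0) by (intro E; apply N5; rewrite E; ring).
    rewrite ?Cpow_add_r, ?Cpow_S. field. repeat split; auto.
Qed.

Lemma rothe (p : C) (Hp : (Cmod p < 1)%R) (w : C) M : ppart w p M = csum (fun i => Gb p M i * p ^ trin i * (- w) ^ i) M.
Proof.
  induction M.
  - unfold Gb; simpl. unfold Qp; simpl. field.
  - rewrite ppart_S, IHM, cpow_Cpow, csum_first.
    rewrite (csum_ext (fun k => Gb p (S M) (S k) * p ^ trin (S k) * (- w) ^ S k)
      (fun k => Gb p M (S k) * p ^ trin (S k) * (- w) ^ S k + (- w) * p ^ M * (Gb p M k * p ^ trin k * (- w) ^ k)))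
      by (intros; apply rothe_pt; auto).
    rewrite csum_plus, csum_scal.
    assert (E0 : forall M, Gb p M 0 * p ^ trin 0 * (- w) ^ 0 = 1).
    { intros. unfold Gb. simpl. rewrite Nat.sub_0_r, Qp_0. pose proof (Qp_nz p Hp M0). field. auto. }
    rewrite E0.
    assert (E1 : csum (fun i => Gb p M i * p ^ trin i * (- w) ^ i) M =
      1 + csum (fun k => Gb p M (S k) * p ^ trin (S k) * (- w) ^ S k) M).
    { destruct M. simpl. rewrite E0. unfold Gb. simpl. ring.
      rewrite csum_first, E0.
      set (g := fun k => Gb p (S M) (S k) * p ^ trin (S k) * (- w) ^ S k).
      change (csum g (S M)) with (csum g M + g (S M)).
      assert (g (S M) = 0). { unfold g, Gb.
        replace (S (S M) <=? S M)%nat with false by (symmetry; apply Nat.leb_gt; lia). ring. }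
      rewrite H. ring. }
    rewrite E1. ring.
Qed.

Lemma ppart_split (p : C) (w : C) a b : ppart w p (a + b) = ppart w p a * ppart (w * p ^ a) p b.
Proof.
  induction b.
  - rewrite Nat.add_0_r. simpl. ring.
  - rewrite Nat.add_succ_r, !ppart_S, IHb, !cpow_Cpow, Cpow_add_r. ring.
Qed.

Lemma ppart_L (p : C) (x : C) N : p <> 0 -> x <> 0 ->
  ppart (x / p ^ N) p N = (- x) ^ N / p ^ trin (S N) * ppart (p / x) p N.
Proof.
  intros Hp0 Hx. induction N.
  - simpl. field.
  - rewrite ppart_shift.
    replace (x / p ^ S N * p) with (x / p ^ N) by (rewrite Cpow_S; field; split; auto; apply Cpow_nz; auto).
    rewrite IHN, ppart_S, cpow_Cpow. simpl trin. rewrite Cpow_add_r, !Cpow_S.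
    pose proof (Cpow_nz p N Hp0). pose proof (Cpow_nz p (trin N + N) Hp0).
    simpl trin in *. rewrite Cpow_add_r in *.
    rewrite ?Cpow_add_r, ?Cpow_S. field. repeat split; auto; apply Cpow_nz; auto.
Qed.


Lemma tt_nat (p x : C) (i N : nat) : p <> 0 -> x <> 0 ->
  tt p x (Z.of_nat i - Z.of_nat N) = p ^ trin (S N) / (- x) ^ N * (p ^ trin i * (- x / p ^ N) ^ i).
Proof.
  intros Hp Hx. unfold tt.
  replace ((- x / p ^ N) ^ i) with ((- x) ^ i / p ^ (N * i)).
  2: { unfold Cdiv. rewrite Cpow_mult_l, Cpow_inv, Cpow_mult_r; auto. apply Cpow_nz; auto. }
  replace (- x) with ((-1) * x) by ring.
  rewrite !Cpow_mult_l.
  rewrite <- !zpow_nat.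
  pose proof m1_nz as Hm.
  rewrite (zpow_ext (-1) (Z.of_nat i - Z.of_nat N) (Z.of_nat i + - Z.of_nat N)) by lia.
  rewrite (zpow_ext x (Z.of_nat i - Z.of_nat N) (Z.of_nat i + - Z.of_nat N)) by lia.
  rewrite (zpow_ext p (tri (Z.of_nat i - Z.of_nat N))
    (Z.of_nat (trin (S N)) + Z.of_nat (trin i) + - Z.of_nat (N * i))).
  2: { pose proof (tri_spec (Z.of_nat i - Z.of_nat N)). pose proof (trin_spec (S N)).
       pose proof (trin_spec i). rewrite Nat2Z.inj_mul. rewrite Nat2Z.inj_succ in *. nia. }
  rewrite !zpow_add, !zpow_opp by auto.
  pose proof (zpow_nz (-1) (Z.of_nat N) Hm). pose proof (zpow_nz x (Z.of_nat N) Hx).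
  pose proof (zpow_nz p (Z.of_nat (N * i)) Hp).
  field. auto.
Qed.

Lemma csum_center (g : Z -> C) N : csum (fun i => g (Z.of_nat i - Z.of_nat N)%Z) (2 * N) = zpart g N.
Proof.
  induction N.
  - unfold zpart. simpl. f_equal.
  - replace (2 * S N)%nat with (S (S (2 * N))) by lia.
    rewrite csum_first. change (csum ?f (S ?n)) with (csum f n + f (S n)).
    rewrite (csum_ext _ (fun i => g (Z.of_nat i - Z.of_nat N)%Z)) by (intros; f_equal; lia).
    rewrite IHN, zpart_S. unfold sym.
    replace (Z.of_nat 0 - Z.of_nat (S N))%Z with (- Z.of_nat (S N))%Z by lia.
    replace (Z.of_nat (S (S (2 * N))) - Z.of_nat (S N))%Z with (Z.of_nat (S N)) by lia.
    ring.
Qed.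

Definition Bq p N i := Qp p (2 * N) / (Qp p (N + i) * Qp p (N - i)).

Lemma finite_jtp (p x : C) N : (Cmod p < 1)%R -> p <> 0 -> x <> 0 ->
  ppart x p N * ppart (p / x) p N = csum (fun i => sym (tt p x) i * Bq p N i) N.
Proof.
  intros Hp Hp0 Hx.
  pose proof (rothe p Hp (x / p ^ N) (2 * N)) as R.
  replace (2 * N)%nat with (N + N)%nat in R at 1 by lia.
  rewrite ppart_split in R.
  replace (x / p ^ N * p ^ N) with x in R by (field; apply Cpow_nz; auto).
  rewrite ppart_L in R by auto.
  assert (E : ppart x p N * ppart (p / x) p N =
     csum (fun i => Gb p (2 * N) i * tt p x (Z.of_nat i - Z.of_nat N)) (2 * N)).
  { rewrite (csum_ext _ (fun i => p ^ trin (S N) / (- x) ^ N * (Gb p (2 * N) i * p ^ trin i * (- (x / p ^ N)) ^ i))).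
    2: { intros i _. rewrite tt_nat by auto. replace (- (x / p ^ N)) with (- x / p ^ N) by (field; apply Cpow_nz; auto). ring. }
    rewrite csum_scal, <- R.
    pose proof (Cpow_nz p (trin (S N)) Hp0). pose proof (Cpow_nz (- x) N).
    assert (- x <> 0). { intro E. apply Hx. replace x with (- (- x)) by ring. rewrite E. ring. }
    field. split; auto. }
  rewrite E.
  transitivity (zpart (fun j => Gb p (2 * N) (Z.to_nat (j + Z.of_nat N)) * tt p x j) N).
  { rewrite <- csum_center. apply csum_ext. intros i _. cbv beta. f_equal. f_equal. lia. }
  unfold zpart. apply csum_ext. intros [|k] Hk.
  - cbn [sym]. unfold Gb, Bq. rewrite Z.add_0_l, Nat2Z.id.
    replace (N <=? 2 * N)%nat with true by (symmetry; apply Nat.leb_le; lia).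
    replace (2 * N - N)%nat with N by lia. rewrite Nat.add_0_r, Nat.sub_0_r. ring.
  - unfold sym. unfold Gb, Bq.
    replace (Z.to_nat (Z.of_nat (S k) + Z.of_nat N)) with (N + S k)%nat by lia.
    replace (Z.to_nat (- Z.of_nat (S k) + Z.of_nat N)) with (N - S k)%nat by lia.
    replace (N + S k <=? 2 * N)%nat with true by (symmetry; apply Nat.leb_le; lia).
    replace (N - S k <=? 2 * N)%nat with true by (symmetry; apply Nat.leb_le; lia).
    replace (2 * N - (N + S k))%nat with (N - S k)%nat by lia.
    replace (2 * N - (N - S k))%nat with (N + S k)%nat by lia.
    pose proof (Qp_nz p Hp (N + S k)). pose proof (Qp_nz p Hp (N - S k)). field. split; auto.
Qed.

Lemma cv_inv u l (c0 : R) : cv u l -> (0 < c0)%R -> (forall n, (c0 <= Cmod (u n))%R) -> l <> 0 ->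
  cv (fun n => / u n) (/ l).
Proof.
  intros H Hc Hu Hl eps He.
  pose proof (proj1 (Cmod_gt_0 l) Hl) as Hml.
  destruct (H (eps * c0 * Cmod l)%R ltac:(apply Rmult_lt_0_compat; [nra|auto])) as [N HN].
  exists N. intros n Hn. specialize (HN n Hn). specialize (Hu n).
  assert (Hun : u n <> 0). { intro E. rewrite E, Cmod_0 in Hu. lra. }
  replace (/ u n - / l) with ((l - u n) / (u n * l)) by (field; auto).
  rewrite Cmod_div by (apply Cmult_neq_0; auto). rewrite Cmod_mult.
  replace (l - u n) with (- (u n - l)) by ring. rewrite Cmod_opp.
  apply (Rmult_lt_reg_r (Cmod (u n) * Cmod l)). nra.
  unfold Rdiv. rewrite Rmult_assoc, Rinv_l by nra. rewrite Rmult_1_r.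
  assert (eps * c0 * Cmod l <= eps * (Cmod (u n) * Cmod l))%R.
  { rewrite Rmult_assoc. apply Rmult_le_compat_l; [lra|]. apply Rmult_le_compat_r; lra. }
  lra.
Qed.

Lemma jtp (p x : C) : (Cmod p < 1)%R -> p <> 0 -> x <> 0 -> theta x p = / qinf p p * TT p x.
Proof.
  intros Hp Hp0 Hx.
  set (c0 := exp (- (Cmod p / ((1 - Cmod p) * (1 - Cmod p))))).
  set (U := exp (Cmod p / (1 - Cmod p))).
  assert (Hc0 : (0 < c0)%R) by apply exp_pos.
  assert (HQl : forall n, (c0 <= Cmod (Qp p n))%R) by (intros; apply Qlow; auto).
  assert (HQu : forall n, (Cmod (Qp p n) <= U)%R) by (intros; apply ppart_bound; auto).
  assert (HQcv : cv (Qp p) (qinf p p)) by (apply ppart_cv; auto).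
  pose proof (Qinf_nz p Hp) as HQnz.
  apply (cv_unique (fun N => ppart x p N * ppart (p / x) p N)).
  - apply cv_mult; apply ppart_cv; auto.
  - apply (cv_ext (fun N => csum (fun i => sym (tt p x) i * Bq p N i) N)).
    { intros; rewrite finite_jtp; auto. }
    destruct (dom_tt p Hp x (/ 2) Hx ltac:(lra)) as [C DC].
    pose proof (dom_nonneg _ _ _ DC).
    apply (tannery _ _ (2 * C) (/ 2) (U / (c0 * c0))).
    + lra.
    + intros [|i]; simpl sym.
      * specialize (DC 0%Z). simpl in DC. simpl. lra.
      * eapply Rle_trans; [apply Cmod_triangle|].
        pose proof (DC (Z.of_nat (S i))). pose proof (DC (- Z.of_nat (S i))%Z).
        rewrite abs_nat_opp in H1. rewrite Zabs2Nat.id in H0, H1. simpl in *. lra.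
    + intros N i Hi. unfold Bq. rewrite Cmod_div by (apply Cmult_neq_0; apply Qp_nz; auto).
      rewrite Cmod_mult. unfold Rdiv. apply Rmult_le_compat; try apply Cmod_ge_0; auto.
      left; apply Rinv_0_lt_compat. pose proof (Qp_nz p Hp (N + i)). pose proof (Qp_nz p Hp (N - i)).
      apply Rmult_lt_0_compat; apply Cmod_gt_0; auto.
      apply Rinv_le_contravar. nra. apply Rmult_le_compat; try lra; auto.
    + intros i. unfold Bq.
      replace (/ qinf p p) with (qinf p p * (/ qinf p p * / qinf p p)) by (field; auto).
      apply (cv_ext (fun N => Qp p (2 * N) * (/ Qp p (N + i) * / Qp p (N - i)))).
      { intros N. field. split; apply Qp_nz; auto. }
      apply cv_mult; [|apply cv_mult].
      * intros e He. destruct (HQcv e He) as [N0 HN0]. exists N0. intros; apply HN0; lia.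
      * apply (cv_inv (fun N => Qp p (N + i)) _ c0); auto. apply cv_shift; auto.
      * apply (cv_inv (fun N => Qp p (N - i)) _ c0); auto.
        intros e He. destruct (HQcv e He) as [N0 HN0]. exists (N0 + i)%nat. intros; apply HN0; lia.
    + apply (zsum_cv _ C (/ 2)); [lra|auto].
Qed.

Lemma Cmult_eq_reg_l (c x y : C) : c <> 0 -> c * x = c * y -> x = y.
Proof. intros Hc E. replace x with (/ c * (c * x)) by (field; auto). rewrite E. field; auto. Qed.

Lemma theta_pair (p : C) : (Cmod p < 1)%R -> exists (K : C) (F0 F1 : C -> C), K <> 0 /\
  forall A B : C, A <> 0 -> B <> 0 ->
  K * K * (theta A p * theta B p) = A * B * F1 (A * B) * F0 (A / B) - A * F0 (A * B) * F1 (A / B).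
Proof.
  intros Hp. destruct (Ceq_dec p 0) as [->|Hp0].
  - exists 1, (fun _ => 1), (fun z => 1 + / z). split. apply C1_nz.
    intros A B HA HB. rewrite !theta_p0 by auto. field. auto.
  - exists (qinf p p), (TH0 p), (TH1 p). split. apply Qinf_nz; auto.
    intros A B HA HB. rewrite <- decomp by auto. rewrite !jtp by auto.
    pose proof (Qinf_nz p Hp). field. auto.
Qed.

Lemma AFG (p a b c R Q : C) : (Cmod p < 1)%R -> a <> 0 -> b <> 0 -> c <> 0 -> R <> 0 -> Q <> 0 ->
  theta (a * R) p * theta (b * R) p * theta (c * Q) p * theta (a * Q / (b * c)) p
  - theta Q p * theta (a * Q / b) p * theta (a * R / c) p * theta (b * c * R) p
  = Q * (theta (a * R * Q) p * theta (b * R / Q) p * theta c p * theta (a / (b * c)) p).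
Proof.
  intros Hp Ha Hb Hc HR HQ.
  destruct (theta_pair p Hp) as [K [F0 [F1 [HK HP]]]].
  assert (HK2 : K * K * (K * K) <> 0) by (repeat apply Cmult_neq_0; auto).
  apply (Cmult_eq_reg_l (K * K * (K * K))); auto.

  assert (nz : forall x y : C, x <> 0 -> y <> 0 -> x * y <> 0) by (intros; apply Cmult_neq_0; auto).
  assert (nzd : forall x y : C, x <> 0 -> y <> 0 -> x / y <> 0) by (intros; unfold Cdiv; apply Cmult_neq_0; auto; apply Cinv_nz; auto).
  pose proof (HP (a * R) (b * R) ltac:(auto) ltac:(auto)) as P1.
  pose proof (HP (c * Q) (a * Q / (b * c)) ltac:(auto) ltac:(auto 6)) as P2.
  pose proof (HP (a * Q / b) Q ltac:(auto) ltac:(auto)) as P3.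
  pose proof (HP (b * c * R) (a * R / c) ltac:(auto) ltac:(auto)) as P4.
  pose proof (HP (a * R * Q) (b * R / Q) ltac:(auto) ltac:(auto)) as P5.
  pose proof (HP c (a / (b * c)) ltac:(auto) ltac:(auto)) as P6.
  replace (K * K * (K * K) *
    (theta (a * R) p * theta (b * R) p * theta (c * Q) p * theta (a * Q / (b * c)) p -
     theta Q p * theta (a * Q / b) p * theta (a * R / c) p * theta (b * c * R) p))
  with ((K * K * (theta (a * R) p * theta (b * R) p)) * (K * K * (theta (c * Q) p * theta (a * Q / (b * c)) p))
      - (K * K * (theta (a * Q / b) p * theta Q p)) * (K * K * (theta (b * c * R) p * theta (a * R / c) p)))
    by ring.
  replace (K * K * (K * K) * (Q * (theta (a * R * Q) p * theta (b * R / Q) p * theta c p * theta (a / (b * c)) p)))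
  with (Q * (K * K * (theta (a * R * Q) p * theta (b * R / Q) p)) * (K * K * (theta c p * theta (a / (b * c)) p)))
    by ring.
  rewrite P1, P2, P3, P4, P5, P6.
  set (X1 := a * b * (R * R)). set (X2 := a * (Q * Q) / b). set (Y1 := a / b). set (Y2 := b * c * c / a).
  replace (a * R * (b * R)) with X1 by (unfold X1; ring).
  replace (a * R / (b * R)) with Y1 by (unfold Y1; field; auto).
  replace (c * Q * (a * Q / (b * c))) with X2 by (unfold X2; field; auto).
  replace (c * Q / (a * Q / (b * c))) with Y2 by (unfold Y2; field; auto).
  replace (a * Q / b * Q) with X2 by (unfold X2; field; auto).
  replace (a * Q / b / Q) with Y1 by (unfold Y1; field; auto).
  replace (b * c * R * (a * R / c)) with X1 by (unfold X1; field; auto).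
  replace (b * c * R / (a * R / c)) with Y2 by (unfold Y2; field; auto).
  replace (a * R * Q * (b * R / Q)) with X1 by (unfold X1; field; auto).
  replace (a * R * Q / (b * R / Q)) with X2 by (unfold X2; field; auto).
  replace (c * (a / (b * c))) with Y1 by (unfold Y1; field; auto).
  replace (c / (a / (b * c))) with Y2 by (unfold Y2; field; auto).
  unfold X1, X2, Y1, Y2. field. auto.
Qed.

Definition gt (a b c q r p : C) (k : nat) : C :=
  theta (a * cpow r k * cpow q k) p * theta (b * cpow r k / cpow q k) p / (theta a p * theta b p)
  * (ell a r p k * ell b r p k * ell c q p k * ell (a / (b * c)) q p k)
  / (ell q q p k * ell (a * q / b) q p k * ell (a * r / c) r p k * ell (b * c * r) r p k)
  * cpow q k.

Definition gC (a b c q r p : C) (n : nat) : C :=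
  (ell (a * r) r p n * ell (b * r) r p n * ell (c * q) q p n * ell (a * q / (b * c)) q p n)
  / (ell q q p n * ell (a * q / b) q p n * ell (a * r / c) r p n * ell (b * c * r) r p n).

Lemma ell_S y q p k : ell y q p (S k) = ell y q p k * theta (y * cpow q k) p.
Proof. reflexivity. Qed.

Lemma ell_shift y q p k : ell y q p (S k) = theta y p * ell (y * q) q p k.
Proof.
  induction k.
  - simpl. replace (y * 1) with y by ring. ring.
  - rewrite ell_S, IHk, ell_S. replace (y * cpow q (S k)) with (y * q * cpow q k) by (simpl; ring). ring.
Qed.

Lemma ell_nz_le y q p n k : ell y q p n <> 0 -> (k <= n)%nat -> ell y q p k <> 0.
Proof.
  intros H Hk. induction n.
  - replace k with O by lia. simpl. apply C1_nz.
  - destruct (Nat.eq_dec k (S n)). subst; auto. apply IHn; [|lia].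
    intro E. apply H. rewrite ell_S, E. ring.
Qed.

Lemma ell_ext y y' q p k : y = y' -> ell y q p k = ell y' q p k.
Proof. intros; subst; auto. Qed.

Lemma cpow_nz (x : C) n : x <> 0 -> cpow x n <> 0.
Proof. intros. rewrite cpow_Cpow. apply Cpow_nz; auto. Qed.

Lemma gasper_alg (N1 N2 N3 N4 M1 M2 M3 M4 t1 t2 t3 t4 t5 t6 t7 t8 u1 u2 ta tb tc td qS : C) :
  M1 <> 0 -> M2 <> 0 -> M3 <> 0 -> M4 <> 0 -> t5 <> 0 -> t6 <> 0 -> t7 <> 0 -> t8 <> 0 ->
  ta <> 0 -> tb <> 0 ->
  t1 * t2 * t3 * t4 - t5 * t6 * t7 * t8 = qS * (u1 * u2 * tc * td) ->
  N1 * N2 * N3 * N4 / (M1 * M2 * M3 * M4) +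
  u1 * u2 / (ta * tb) * (ta * N1 * (tb * N2) * (tc * N3) * (td * N4)) /
  (M1 * t5 * (M2 * t6) * (M3 * t7) * (M4 * t8)) * qS =
  N1 * t1 * (N2 * t2) * (N3 * t3) * (N4 * t4) / (M1 * t5 * (M2 * t6) * (M3 * t7) * (M4 * t8)).
Proof.
  intros H1 H2 H3 H4 H5 H6 H7 H8 Ha Hb AF.
  transitivity (N1 * N2 * N3 * N4 / (M1 * M2 * M3 * M4) +
    (qS * (u1 * u2 * tc * td)) * (N1 * N2 * N3 * N4) / (M1 * M2 * M3 * M4 * (t5 * t6 * t7 * t8))).
  { field. repeat split; auto. }
  rewrite <- AF. field. repeat split; auto.
Qed.

Lemma gasper (p a b c q r : C) n : (Cmod p < 1)%R -> a <> 0 -> b <> 0 -> c <> 0 -> q <> 0 -> r <> 0 ->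
  theta a p * theta b p <> 0 ->
  ell q q p n <> 0 -> ell (a * q / b) q p n <> 0 -> ell (a * r / c) r p n <> 0 -> ell (b * c * r) r p n <> 0 ->
  csum (gt a b c q r p) n = gC a b c q r p n.
Proof.
  intros Hp Ha Hb Hc Hq Hr Hab D1 D2 D3 D4.
  assert (Ha' : theta a p <> 0) by (intro E; apply Hab; rewrite E; ring).
  assert (Hb' : theta b p <> 0) by (intro E; apply Hab; rewrite E; ring).
  assert (G : forall m, (m <= n)%nat -> csum (gt a b c q r p) m = gC a b c q r p m).
  { induction m; intros Hm.
    - unfold gt, gC. simpl. replace (a * 1 * 1) with a by ring. replace (b * 1 / 1) with b by field.
      field. repeat split; auto.
    - pose proof (ell_nz_le _ _ _ _ _ D1 Hm) as E1. pose proof (ell_nz_le _ _ _ _ _ D2 Hm) as E2.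
      pose proof (ell_nz_le _ _ _ _ _ D3 Hm) as E3. pose proof (ell_nz_le _ _ _ _ _ D4 Hm) as E4.
      change (csum (gt a b c q r p) (S m)) with (csum (gt a b c q r p) m + gt a b c q r p (S m)).
      rewrite IHm by lia.
      pose proof (AFG p a b c (cpow r (S m)) (cpow q (S m)) Hp Ha Hb Hc (cpow_nz r _ Hr) (cpow_nz q _ Hq)) as AF.
      replace (theta (a * cpow r (S m)) p) with (theta (a * r * cpow r m) p) in AF by (f_equal; simpl; ring).
      replace (theta (b * cpow r (S m)) p) with (theta (b * r * cpow r m) p) in AF by (f_equal; simpl; ring).
      replace (theta (c * cpow q (S m)) p) with (theta (c * q * cpow q m) p) in AF by (f_equal; simpl; ring).
      replace (theta (a * cpow q (S m) / (b * c)) p) with (theta (a * q / (b * c) * cpow q m) p) in AF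
        by (f_equal; simpl; field; auto).
      replace (theta (cpow q (S m)) p) with (theta (q * cpow q m) p) in AF by (f_equal; simpl; ring).
      replace (theta (a * cpow q (S m) / b) p) with (theta (a * q / b * cpow q m) p) in AF
        by (f_equal; simpl; field; auto).
      replace (theta (a * cpow r (S m) / c) p) with (theta (a * r / c * cpow r m) p) in AF
        by (f_equal; simpl; field; auto).
      replace (theta (b * c * cpow r (S m)) p) with (theta (b * c * r * cpow r m) p) in AF
        by (f_equal; simpl; ring).
      unfold gt, gC. rewrite (ell_shift a), (ell_shift b), (ell_shift c), (ell_shift (a / (b * c))). rewrite !ell_S.
      rewrite (ell_ext (a / (b * c) * q) (a * q / (b * c))) by (field; auto).
      assert (F1 : theta (q * cpow q m) p <> 0) by (intro E; apply E1; rewrite ell_S, E; ring).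
      assert (F2 : theta (a * q / b * cpow q m) p <> 0) by (intro E; apply E2; rewrite ell_S, E; ring).
      assert (F3 : theta (a * r / c * cpow r m) p <> 0) by (intro E; apply E3; rewrite ell_S, E; ring).
      assert (F4 : theta (b * c * r * cpow r m) p <> 0) by (intro E; apply E4; rewrite ell_S, E; ring).
      assert (E1' : ell q q p m <> 0) by (intro E; apply E1; rewrite ell_S, E; ring).
      assert (E2' : ell (a * q / b) q p m <> 0) by (intro E; apply E2; rewrite ell_S, E; ring).
      assert (E3' : ell (a * r / c) r p m <> 0) by (intro E; apply E3; rewrite ell_S, E; ring).
      assert (E4' : ell (b * c * r) r p m <> 0) by (intro E; apply E4; rewrite ell_S, E; ring).
      apply gasper_alg; auto.
  }
  apply G; auto.
Qed.

Fixpoint cprod (f : nat -> C) (k : nat) : C := match k with O => 1 | S j => cprod f j * f j end.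

Lemma cpow_add (x : C) a b : cpow x (a + b) = cpow x a * cpow x b.
Proof. rewrite !cpow_Cpow. apply Cpow_add_r. Qed.

Lemma ell_rev1 (y q p : C) n k : (k <= n)%nat ->
  ell y q p n = ell y q p (n - k) * cprod (fun i => theta (y * cpow q (n - 1 - i)) p) k.
Proof.
  induction k; intros Hk.
  - rewrite Nat.sub_0_r. simpl. ring.
  - rewrite IHk by lia. simpl cprod.
    replace (n - k)%nat with (S (n - S k)) by lia. rewrite ell_S.
    replace (n - 1 - k)%nat with (n - S k)%nat by lia. ring.
Qed.

Definition pfac (y q : C) n k := cprod (fun i => - (y * cpow q (n - 1 - i))) k.

Lemma theta_flip (z p : C) : (Cmod p < 1)%R -> z <> 0 -> theta z p = - z * theta (/ z) p.
Proof. intros Hp Hz. rewrite theta_inv by auto. field. auto. Qed.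

Lemma ell_rev2 (y q p : C) n k : (Cmod p < 1)%R -> y <> 0 -> q <> 0 -> (k <= n)%nat ->
  cprod (fun i => theta (y * cpow q (n - 1 - i)) p) k = pfac y q n k * ell (/ (y * cpow q (n - 1))) q p k.
Proof.
  intros Hp Hy Hq. induction k; intros Hk.
  - unfold pfac. simpl. ring.
  - simpl cprod. unfold pfac in *. simpl cprod. rewrite IHk by lia. rewrite ell_S.
    rewrite (theta_flip (y * cpow q (n - 1 - k)) p Hp) by (apply Cmult_neq_0; auto; apply cpow_nz; auto).
    replace (/ (y * cpow q (n - 1 - k))) with (/ (y * cpow q (n - 1)) * cpow q k).
    + ring.
    + replace (n - 1)%nat with ((n - 1 - k) + k)%nat at 1 by lia. rewrite cpow_add.
      pose proof (cpow_nz q (n - 1 - k) Hq). pose proof (cpow_nz q k Hq). field. auto.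
Qed.

Lemma pfac_nz (y q : C) n k : y <> 0 -> q <> 0 -> pfac y q n k <> 0.
Proof.
  intros Hy Hq. unfold pfac. induction k; simpl. apply C1_nz. apply Cmult_neq_0; auto.
  intro E. apply (Cmult_neq_0 y (cpow q (n - 1 - k))); auto. apply cpow_nz; auto.
  replace (y * cpow q (n - 1 - k)) with (- - (y * cpow q (n - 1 - k))) by ring. rewrite E. ring.
Qed.

Lemma pfac_pair (y1 y2 z1 z2 q : C) n k : y1 * y2 = z1 * z2 ->
  pfac y1 q n k * pfac y2 q n k = pfac z1 q n k * pfac z2 q n k.
Proof.
  intros H. unfold pfac. induction k; simpl. ring.
  transitivity ((cprod (fun i => - (y1 * cpow q (n - 1 - i))) k * cprod (fun i => - (y2 * cpow q (n - 1 - i))) k)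
    * ((y1 * y2) * (cpow q (n - 1 - k) * cpow q (n - 1 - k)))). ring.
  rewrite IHk, H. ring.
Qed.

Lemma ell_rev (y q p x : C) n k : (Cmod p < 1)%R -> y <> 0 -> q <> 0 -> (1 <= n)%nat -> (k <= n)%nat ->
  x = / (y * cpow q (n - 1)) ->
  ell y q p n = ell y q p (n - k) * pfac y q n k * ell x q p k.
Proof.
  intros Hp Hy Hq Hn Hk Hx. subst x. rewrite (ell_rev1 y q p n k Hk), ell_rev2 by auto. ring.
Qed.

Definition Vf (a b c q r p : C) (n k : nat) : C :=
  (ell (c * / cpow r n / a) r p k * ell (/ cpow r n / (b * c)) r p k
   * ell (/ cpow q n) q p k * ell (b * / cpow q n / a) q p k)
  / (ell (/ cpow q n / c) q p k * ell (b * c * / cpow q n / a) q p k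
     * ell (/ cpow r n / a) r p k * ell (/ cpow r n / b) r p k).

Lemma rev_alg (E1 E2 E3 E4 P1 P2 P3 P4 X1 X2 X3 X4 F1 F2 F3 F4 Q1 Q2 Q3 Q4 Z1 Z2 Z3 Z4 : C) :
  X1 <> 0 -> X2 <> 0 -> X3 <> 0 -> X4 <> 0 -> F1 <> 0 -> F2 <> 0 -> F3 <> 0 -> F4 <> 0 ->
  Q1 <> 0 -> Q2 <> 0 -> Q3 <> 0 -> Q4 <> 0 -> Z1 <> 0 -> Z2 <> 0 -> Z3 <> 0 -> Z4 <> 0 ->
  P1 <> 0 -> P2 <> 0 -> P3 <> 0 -> P4 <> 0 ->
  P1 * P2 = Q3 * Q4 -> P3 * P4 = Q1 * Q2 ->
  (E1 * P1 * X1 * (E2 * P2 * X2) * (E3 * P3 * X3) * (E4 * P4 * X4)) /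
  (F1 * Q1 * Z1 * (F2 * Q2 * Z2) * (F3 * Q3 * Z3) * (F4 * Q4 * Z4)) *
  ((Z3 * Z4 * Z1 * Z2) / (X3 * X4 * X1 * X2)) = E1 * E2 * E3 * E4 / (F1 * F2 * F3 * F4).
Proof.
  intros. replace P1 with (Q3 * Q4 / P2) by (field_simplify_eq; auto; rewrite <- H19; ring).
  replace P3 with (Q1 * Q2 / P4) by (field_simplify_eq; auto; rewrite <- H20; ring).
  field. repeat split; auto.
Qed.

Lemma cpow_pred (x : C) n : (1 <= n)%nat -> cpow x n = cpow x (n - 1) * x.
Proof. intros. destruct n. lia. simpl. rewrite Nat.sub_0_r. auto. Qed.

Lemma rev_main (a b c q r p : C) n k : (Cmod p < 1)%R ->
  a <> 0 -> b <> 0 -> c <> 0 -> q <> 0 -> r <> 0 -> (1 <= n)%nat -> (k <= n)%nat ->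
  ell q q p n <> 0 -> ell (a * q / b) q p n <> 0 -> ell (a * r / c) r p n <> 0 -> ell (b * c * r) r p n <> 0 ->
  ell (/ cpow q n / c) q p n <> 0 -> ell (b * c * / cpow q n / a) q p n <> 0 ->
  ell (/ cpow r n / a) r p n <> 0 -> ell (/ cpow r n / b) r p n <> 0 ->
  gC a b c q r p n * Vf a b c q r p n k = gC a b c q r p (n - k).
Proof.
  intros Hp Ha Hb Hc Hq Hr Hn Hk D1 D2 D3 D4 V1 V2 V3 V4.
  assert (nz : forall x y : C, x <> 0 -> y <> 0 -> x * y <> 0) by (intros; apply Cmult_neq_0; auto).
  assert (nzd : forall x y : C, x <> 0 -> y <> 0 -> x / y <> 0) by (intros; unfold Cdiv; apply Cmult_neq_0; auto; apply Cinv_nz; auto).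
  pose proof (cpow_pred q n Hn) as Cq. pose proof (cpow_pred r n Hn) as Cr.
  pose proof (cpow_nz q (n - 1) Hq) as Nq. pose proof (cpow_nz r (n - 1) Hr) as Nr.
  unfold gC, Vf.
  rewrite (ell_rev (a * r) r p (/ cpow r n / a) n k) by (auto; rewrite Cr; field; auto).
  rewrite (ell_rev (b * r) r p (/ cpow r n / b) n k) by (auto; rewrite Cr; field; auto).
  rewrite (ell_rev (c * q) q p (/ cpow q n / c) n k) by (auto; rewrite Cq; field; auto).
  rewrite (ell_rev (a * q / (b * c)) q p (b * c * / cpow q n / a) n k) by (auto; rewrite Cq; field; auto).
  rewrite (ell_rev q q p (/ cpow q n) n k) in D1 |- * by (auto; rewrite Cq; field; auto).
  rewrite (ell_rev (a * q / b) q p (b * / cpow q n / a) n k) in D2 |- * by (auto; rewrite Cq; field; auto).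
  rewrite (ell_rev (a * r / c) r p (c * / cpow r n / a) n k) in D3 |- * by (auto; rewrite Cr; field; auto).
  rewrite (ell_rev (b * c * r) r p (/ cpow r n / (b * c)) n k) in D4 |- * by (auto; rewrite Cr; field; auto).
  assert (W : forall u v w : C, u * v * w <> 0 -> u <> 0 /\ v <> 0 /\ w <> 0).
  { intros u v w H. repeat split; intro E; apply H; rewrite E; ring. }
  apply W in D1, D2, D3, D4.
  destruct D1 as [F1 [Q1 Z1]]. destruct D2 as [F2 [Q2 Z2]]. destruct D3 as [F3 [Q3 Z3]]. destruct D4 as [F4 [Q4 Z4]].
  apply rev_alg; auto; try (eapply ell_nz_le; eauto; lia); try (apply pfac_nz; auto).
  - apply pfac_pair. field. auto.
  - apply pfac_pair. field. auto.
Qed.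

Lemma csum_rev (g : nat -> C) m : csum g m = csum (fun i => g (m - i)%nat) m.
Proof.
  revert g. induction m; intros g. simpl. auto.
  rewrite csum_first, IHm. change (csum (fun i => g (S m - i)%nat) (S m)) with
    (csum (fun i => g (S m - i)%nat) m + g (S m - S m)%nat).
  rewrite Nat.sub_diag. rewrite (csum_ext _ (fun i => g (S m - i)%nat)). ring.
  intros k Hk. f_equal. lia.
Qed.

Lemma tri_step (f : nat -> nat -> C) n :
  csum (fun k => csum (f k) (S n - k)) (S n) =
  csum (fun k => csum (f k) (n - k)) n + csum (fun k => f k (S n - k)%nat) (S n).
Proof.
  change (csum (fun k => csum (f k) (S n - k)) (S n)) with
    (csum (fun k => csum (f k) (S n - k)) n + csum (f (S n)) (S n - S n)).
  change (csum (fun k => f k (S n - k)%nat) (S n)) with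
    (csum (fun k => f k (S n - k)%nat) n + f (S n) (S n - S n)%nat).
  rewrite Nat.sub_diag. simpl (csum (f (S n)) 0).
  rewrite (csum_ext (fun k => csum (f k) (S n - k)) (fun k => csum (f k) (n - k) + f k (S n - k)%nat)).
  - rewrite csum_plus. ring.
  - intros k Hk. replace (S n - k)%nat with (S (n - k)) by lia. simpl. auto.
Qed.

Lemma csum_triangle (f : nat -> nat -> C) n :
  csum (fun k => csum (f k) (n - k)) n = csum (fun i => csum (fun k => f k i) (n - i)) n.
Proof.
  induction n.
  - simpl. auto.
  - rewrite tri_step, IHn. rewrite (tri_step (fun i k => f k i)). f_equal.
    rewrite csum_rev. apply csum_ext. intros i Hi. f_equal. lia.
Qed.

Theorem mainTheorem14 (p P : C) (n : nat)
  (a b c q r A B C0 Q R0 : C)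
  (hp : (Cmod p < 1)%R) (hP : (Cmod P < 1)%R)
  (ha : a <> 0) (hb : b <> 0) (hc : c <> 0) (hq : q <> 0) (hr : r <> 0)
  (hA : A <> 0) (hB : B <> 0) (hC : C0 <> 0) (hQ : Q <> 0) (hR : R0 <> 0)
  (* well-definedness: all denominators are nonzero *)
  (d1 : theta a p * theta b p <> 0)
  (d2 : theta A P * theta B P <> 0)
  (d3 : ell q q p n <> 0) (d4 : ell (a * q / b) q p n <> 0)
  (d5 : ell (a * r / c) r p n <> 0) (d6 : ell (b * c * r) r p n <> 0)
  (d7 : ell (/ cpow Q n / C0) Q P n <> 0)
  (d8 : ell (B * C0 * / cpow Q n / A) Q P n <> 0)
  (d9 : ell (/ cpow R0 n / A) R0 P n <> 0)
  (d10 : ell (/ cpow R0 n / B) R0 P n <> 0)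
  (d11 : ell (A * R0) R0 P n <> 0) (d12 : ell (B * R0) R0 P n <> 0)
  (d13 : ell (C0 * Q) Q P n <> 0) (d14 : ell (A * Q / (B * C0)) Q P n <> 0)
  (d15 : ell Q Q P n <> 0) (d16 : ell (A * Q / B) Q P n <> 0)
  (d17 : ell (A * R0 / C0) R0 P n <> 0) (d18 : ell (B * C0 * R0) R0 P n <> 0)
  (d19 : ell (/ cpow q n / c) q p n <> 0)
  (d20 : ell (b * c * / cpow q n / a) q p n <> 0)
  (d21 : ell (/ cpow r n / a) r p n <> 0)
  (d22 : ell (/ cpow r n / b) r p n <> 0) :
  csum (fun k =>
      theta (a * cpow r k * cpow q k) p * theta (b * cpow r k / cpow q k) p
        / (theta a p * theta b p)
    * (ell a r p k * ell b r p k * ell c q p k * ell (a / (b * c)) q p k)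
        / (ell q q p k * ell (a * q / b) q p k
           * ell (a * r / c) r p k * ell (b * c * r) r p k)
    * (ell (C0 * / cpow R0 n / A) R0 P k * ell (/ cpow R0 n / (B * C0)) R0 P k
       * ell (/ cpow Q n) Q P k * ell (B * / cpow Q n / A) Q P k)
        / (ell (/ cpow Q n / C0) Q P k * ell (B * C0 * / cpow Q n / A) Q P k
           * ell (/ cpow R0 n / A) R0 P k * ell (/ cpow R0 n / B) R0 P k)
    * cpow q k) n
  =
  (ell (a * r) r p n * ell (b * r) r p n * ell (c * q) q p n
     * ell (a * q / (b * c)) q p n * ell Q Q P n * ell (A * Q / B) Q P n
     * ell (A * R0 / C0) R0 P n * ell (B * C0 * R0) R0 P n)
  / (ell q q p n * ell (a * q / b) q p n * ell (a * r / c) r p n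
     * ell (b * c * r) r p n * ell (A * R0) R0 P n * ell (B * R0) R0 P n
     * ell (C0 * Q) Q P n * ell (A * Q / (B * C0)) Q P n)
  * csum (fun k =>
      theta (A * cpow R0 k * cpow Q k) P * theta (B * cpow R0 k / cpow Q k) P
        / (theta A P * theta B P)
    * (ell A R0 P k * ell B R0 P k * ell C0 Q P k * ell (A / (B * C0)) Q P k)
        / (ell Q Q P k * ell (A * Q / B) Q P k
           * ell (A * R0 / C0) R0 P k * ell (B * C0 * R0) R0 P k)
    * (ell (c * / cpow r n / a) r p k * ell (/ cpow r n / (b * c)) r p k
       * ell (/ cpow q n) q p k * ell (b * / cpow q n / a) q p k)
        / (ell (/ cpow q n / c) q p k * ell (b * c * / cpow q n / a) q p k
           * ell (/ cpow r n / a) r p k * ell (/ cpow r n / b) r p k)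
    * cpow Q k) n.
Proof.
  assert (nz : forall x y : C, x <> 0 -> y <> 0 -> x * y <> 0) by (intros; apply Cmult_neq_0; auto).
  assert (W2 : forall u v : C, u * v <> 0 -> u <> 0 /\ v <> 0).
  { intros u v H. split; intro E; apply H; rewrite E; ring. }
  destruct (Nat.eq_dec n 0) as [->|Hn0].
  { simpl. replace (a * 1 * 1) with a by ring. replace (b * 1 / 1) with b by field.
    replace (A * 1 * 1) with A by ring. replace (B * 1 / 1) with B by field.
    destruct (W2 _ _ d1). destruct (W2 _ _ d2).
    field. repeat split; auto; apply C1_nz. }
  assert (Hn : (1 <= n)%nat) by lia.
  rewrite (csum_ext _ (fun k => gt a b c q r p k * Vf A B C0 Q R0 P n k)).
  2: { intros k _. unfold gt, Vf. unfold Cdiv. ring. }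
  rewrite (csum_ext (fun k => theta (A * cpow R0 k * cpow Q k) P * theta (B * cpow R0 k / cpow Q k) P / (theta A P * theta B P) * (ell A R0 P k * ell B R0 P k * ell C0 Q P k * ell (A / (B * C0)) Q P k) / (ell Q Q P k * ell (A * Q / B) Q P k * ell (A * R0 / C0) R0 P k * ell (B * C0 * R0) R0 P k) * (ell (c * / cpow r n / a) r p k * ell (/ cpow r n / (b * c)) r p k * ell (/ cpow q n) q p k * ell (b * / cpow q n / a) q p k) / (ell (/ cpow q n / c) q p k * ell (b * c * / cpow q n / a) q p k * ell (/ cpow r n / a) r p k * ell (/ cpow r n / b) r p k) * cpow Q k) (fun k => gt A B C0 Q R0 P k * Vf a b c q r p n k)).
  2: { intros k _. unfold gt, Vf. unfold Cdiv. ring. }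
  set (gU := gC A B C0 Q R0 P). set (gL := gC a b c q r p).
  assert (HgU : gU n <> 0).
  { unfold gU, gC. unfold Cdiv. repeat apply nz; auto. apply Cinv_nz. repeat apply nz; auto. }
  rewrite (csum_ext _ (fun k => / gU n * (gt a b c q r p k * gU (n - k)%nat))).
  2: { intros k Hk. unfold gU. rewrite <- (rev_main A B C0 Q R0 P n k) by auto. field. exact HgU. }
  rewrite csum_scal.
  replace ((ell (a * r) r p n * ell (b * r) r p n * ell (c * q) q p n * ell (a * q / (b * c)) q p n *
     ell Q Q P n * ell (A * Q / B) Q P n * ell (A * R0 / C0) R0 P n * ell (B * C0 * R0) R0 P n) /
    (ell q q p n * ell (a * q / b) q p n * ell (a * r / c) r p n * ell (b * c * r) r p n *
     ell (A * R0) R0 P n * ell (B * R0) R0 P n * ell (C0 * Q) Q P n * ell (A * Q / (B * C0)) Q P n))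
    with (gL n / gU n).
  2: { unfold gL, gU, gC. field. repeat split; auto. }
  rewrite <- (csum_scal (gL n / gU n)).
  rewrite (csum_ext (fun k => gL n / gU n * (gt A B C0 Q R0 P k * Vf a b c q r p n k))
    (fun k => / gU n * (gt A B C0 Q R0 P k * gL (n - k)%nat))).
  2: { intros k Hk. unfold gL. rewrite <- (rev_main a b c q r p n k) by auto. field. exact HgU. }
  rewrite csum_scal. f_equal.
  rewrite (csum_ext _ (fun k => gt a b c q r p k * csum (gt A B C0 Q R0 P) (n - k))).
  2: { intros k Hk. unfold gU. rewrite gasper; auto; eapply ell_nz_le; eauto; lia. }
  rewrite (csum_ext (fun k => gt A B C0 Q R0 P k * gL (n - k)%nat)
                    (fun k => gt A B C0 Q R0 P k * csum (gt a b c q r p) (n - k))).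
  2: { intros k Hk. unfold gL. rewrite gasper; auto; eapply ell_nz_le; eauto; lia. }
  rewrite (csum_ext (fun k => gt a b c q r p k * csum (gt A B C0 Q R0 P) (n - k))
    (fun k => csum (fun i => gt a b c q r p k * gt A B C0 Q R0 P i) (n - k))).
  2: { intros; rewrite <- csum_scal; auto. }
  rewrite (csum_ext (fun k => gt A B C0 Q R0 P k * csum (gt a b c q r p) (n - k))
    (fun i => csum (fun k => gt a b c q r p k * gt A B C0 Q R0 P i) (n - i))).
  2: { intros; rewrite <- csum_scal; apply csum_ext; intros; ring. }
  apply (csum_triangle (fun k i => gt a b c q r p k * gt A B C0 Q R0 P i)).
Qed.
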